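(* Fix $0<\alpha<1$ and an integer $l\ge1$, let $\phi_\alpha(t)=t^{\alpha-1}E_{\alpha,\alpha}(-t^{\alpha})$, and let $P_{n,\alpha,l}(t)=\frac{(l)_n}{n!}t^{(n+l)\alpha-1}E^{n+l}_{\alpha,(n+l)\alpha}(-t^{\alpha})$. Define $m_{\alpha,l}(t)=\sum_{n=0}^\infty n\,P_{n,\alpha,l}(t)$ for $t>0$. Then $$m_{\alpha,l}(t)=-\frac{\partial}{\partial k}\Big[t^{\alpha l-1}E^{l}_{\alpha,\alpha l}\big(-(1-e^{-k})t^{\alpha}\big)\Big]_{k=0}=\frac{l\,t^{l\alpha+\alpha-1}}{\Gamma((l+1)\alpha)},$$ and $m_{\alpha,l}$ satisfies the renewal equation $$m_{\alpha,l}(t)=l\,(I^{\alpha l}_{0+}\phi_\alpha)(t)+(m_{\alpha,l}*\phi_\alpha)(t),\qquad t>0.$$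
   Context: $E^{\gamma}_{\alpha,\beta}(x)=\sum_{k\ge0}\frac{(\gamma)_k x^k}{\Gamma(\alpha k+\beta)\,k!}$ with Pochhammer symbol $(\gamma)_k$, $E_{\alpha,\beta}=E^1_{\alpha,\beta}$. $(I^{\beta}_{0+}f)(t)=\frac{1}{\Gamma(\beta)}\int_0^t(t-u)^{\beta-1}f(u)\,du$ for $\beta>0$. Laplace convolution $(f*g)(t)=\int_0^t f(t-u)g(u)\,du$. *)

(* Defs.v *)
From Stdlib Require Import Reals Lra ClassicalEpsilon Arith Factorial.
Open Scope R_scope.

(** Value of a convergent series (sum_{n>=0} f n); arbitrary if divergent. *)
Definition sum_inf (f : nat -> R) : R :=
  epsilon (inhabits 0) (fun l => infinite_sum f l).

Fixpoint prod_shift (x : R) (n : nat) : R :=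
  match n with
  | O => x
  | S k => prod_shift x k * (x + INR (S k))
  end.

(** Gauss' limit definition of the Gamma function:
    Gamma(x) = lim_{n->oo} n! n^x / (x (x+1) ... (x+n)). *)
Definition gauss_seq (x : R) (n : nat) : R :=
  INR (fact n) * Rpower (INR n) x / prod_shift x n.

Definition Gamma (x : R) : R :=
  epsilon (inhabits 0) (fun g => Un_cv (gauss_seq x) g).

Fixpoint poch (g : R) (k : nat) : R :=
  match k with
  | O => 1
  | S j => poch g j * (g + INR j)
  end.

Definition ML3 (a b g x : R) : R :=
  sum_inf (fun k => poch g k * x ^ k / (Gamma (a * INR k + b) * INR (fact k))).

Definition phi (a t : R) : R := Rpower t (a - 1) * ML3 a a 1 (- Rpower t a).

Definition Pnal (a : R) (l n : nat) (t : R) : R :=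
  poch (INR l) n / INR (fact n) * Rpower t ((INR n + INR l) * a - 1)
  * ML3 a ((INR n + INR l) * a) (INR n + INR l) (- Rpower t a).

Definition m_al (a : R) (l : nat) (t : R) : R :=
  sum_inf (fun n => INR n * Pnal a l n t).

Definition improper_integral (f : R -> R) (a b v : R) : Prop :=
  (forall c d, a < c -> c <= d -> d < b -> inhabited (Riemann_integrable f c d)) /\
  (forall eps, eps > 0 -> exists delta, delta > 0 /\
     forall c d (pr : Riemann_integrable f c d),
       a < c < a + delta -> b - delta < d < b -> c <= d ->
       Rabs (RiemannInt pr - v) < eps).

(* Main.v *)
Require Import Defs.
From Stdlib Require Import Reals Lra Lia Factorial ClassicalEpsilon ZArith.
From Coquelicot Require Import Coquelicot.
Open Scope R_scope.

Ltac fld := repeat rewrite S_INR in *; field.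

Lemma exp_mono x y : x <= y -> exp x <= exp y.
Proof. intros [H|H]; [left; apply exp_increasing; auto| subst; lra]. Qed.

Lemma ln_le_m1 y : 0 < y -> ln y <= y - 1.
Proof. intros Hy. pose proof (exp_ineq1_le (ln y)). rewrite exp_ln in H; lra. Qed.

Lemma prod_shift_pos x n : 0 < x -> 0 < prod_shift x n.
Proof. intros Hx; induction n; cbn [prod_shift]; auto. apply Rmult_lt_0_compat; auto.
  pose proof (pos_INR (S n)); lra. Qed.

Lemma INR_S_pos n : 0 < INR (S n).
Proof. apply lt_0_INR; lia. Qed.

Lemma gauss_step x n : 0 < x -> (1 <= n)%nat ->
  gauss_seq x (S n) = gauss_seq x n *
    (INR (S n) * Rpower (INR (S n) / INR n) x / (x + INR (S n))).
Proof.
  intros Hx Hn. unfold gauss_seq. cbn [prod_shift]. rewrite fact_simpl, mult_INR.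
  assert (Hn0 : 0 < INR n) by (apply lt_0_INR; lia).
  assert (E : INR (S n) = INR n * (INR (S n) / INR n)) by (fld; lra).
  rewrite E at 2. rewrite <- Rpower_mult_distr; auto.
  2: { apply Rdiv_lt_0_compat; auto; apply INR_S_pos. }
  pose proof (prod_shift_pos x n Hx). pose proof (INR_S_pos n).
  fld. split; lra.
Qed.

Lemma ratio_ge1 x n : 0 < x -> (1 <= n)%nat ->
  1 <= INR (S n) * Rpower (INR (S n) / INR n) x / (x + INR (S n)).
Proof.
  intros Hx Hn.
  assert (Hn0 : 0 < INR n) by (apply lt_0_INR; lia).
  pose proof (INR_S_pos n) as HS.
  assert (HSn : INR (S n) = INR n + 1) by (rewrite S_INR; auto).
  assert (L : / INR (S n) <= ln (INR (S n) / INR n)).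
  { assert (E : INR (S n) / INR n = / (INR n / INR (S n))) by (fld; lra).
    rewrite E, ln_Rinv by (apply Rdiv_lt_0_compat; lra).
    pose proof (ln_le_m1 (INR n / INR (S n)) ltac:(apply Rdiv_lt_0_compat; lra)).
    assert (INR n / INR (S n) - 1 = - / INR (S n)) by (fld; lra). lra. }
  assert (P : 1 + x / INR (S n) <= Rpower (INR (S n) / INR n) x).
  { unfold Rpower. eapply Rle_trans; [apply exp_ineq1_le|]. apply exp_mono.
    unfold Rdiv at 1. apply Rmult_le_compat_l; lra. }
  apply (Rmult_le_reg_r (x + INR (S n))); [lra|].
  unfold Rdiv. rewrite Rmult_assoc, Rinv_l, Rmult_1_r, Rmult_1_l by lra.
  assert (INR (S n) * (1 + x / INR (S n)) = x + INR (S n)) by (fld; lra).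
  apply Rle_trans with (INR (S n) * (1 + x / INR (S n))); [lra|].
  apply Rmult_le_compat_l; lra.
Qed.

Lemma ratio_le x n : 0 < x -> (1 <= n)%nat ->
  INR (S n) * Rpower (INR (S n) / INR n) x / (x + INR (S n))
  <= exp (x * (1 + x) / (INR n * INR (S n))).
Proof.
  intros Hx Hn.
  assert (Hn0 : 0 < INR n) by (apply lt_0_INR; lia).
  pose proof (INR_S_pos n) as HS.
  assert (HSn : INR (S n) = INR n + 1) by (rewrite S_INR; auto).
  assert (L1 : ln (INR (S n) / INR n) <= / INR n).
  { pose proof (ln_le_m1 (INR (S n) / INR n) ltac:(apply Rdiv_lt_0_compat; lra)).
    assert (INR (S n) / INR n - 1 = / INR n) by (fld; lra). lra. }
  assert (L2 : x / (x + INR (S n)) <= ln ((x + INR (S n)) / INR (S n))).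
  { assert (E : (x + INR (S n)) / INR (S n) = / (INR (S n) / (x + INR (S n)))) by (fld; lra).
    rewrite E, ln_Rinv by (apply Rdiv_lt_0_compat; lra).
    pose proof (ln_le_m1 (INR (S n) / (x + INR (S n))) ltac:(apply Rdiv_lt_0_compat; lra)).
    assert (INR (S n) / (x + INR (S n)) - 1 = - (x / (x + INR (S n)))) by (fld; lra). lra. }
  assert (E2 : INR (S n) / (x + INR (S n)) = exp (- ln ((x + INR (S n)) / INR (S n)))).
  { rewrite <- ln_Rinv by (apply Rdiv_lt_0_compat; lra). rewrite exp_ln.
    fld; lra. apply Rinv_0_lt_compat, Rdiv_lt_0_compat; lra. }
  assert (E3 : INR (S n) * Rpower (INR (S n) / INR n) x / (x + INR (S n))
     = Rpower (INR (S n) / INR n) x * (INR (S n) / (x + INR (S n)))) by (fld; lra).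
  rewrite E3, E2. unfold Rpower. rewrite <- exp_plus. apply exp_mono.
  apply Rle_trans with (x * / INR n - x / (x + INR (S n))).
  { assert (x * ln (INR (S n) / INR n) <= x * / INR n) by (apply Rmult_le_compat_l; lra). lra. }
  assert (E4 : x * / INR n - x / (x + INR (S n)) = x * (1+x) / (INR n * (x + INR (S n)))) by (fld; lra).
  rewrite E4. unfold Rdiv. apply Rmult_le_compat_l. nra.
  apply Rinv_le_contravar. nra. nra.
Qed.

Lemma gauss_pos x n : 0 < x -> 0 < gauss_seq x n.
Proof.
  intros Hx. unfold gauss_seq. apply Rdiv_lt_0_compat.
  apply Rmult_lt_0_compat. apply lt_0_INR, lt_O_fact. unfold Rpower; apply exp_pos.
  apply prod_shift_pos; auto.
Qed.

Lemma gauss_bound x m : 0 < x ->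
  gauss_seq x (S m) <= gauss_seq x 1 * exp (x * (1 + x) * (1 - / INR (S m))).
Proof.
  intros Hx. induction m.
  - replace (1 - / INR 1) with 0 by (simpl; field). rewrite Rmult_0_r, exp_0. lra.
  - rewrite gauss_step by (auto; lia).
    pose proof (ratio_le x (S m) Hx ltac:(lia)).
    pose proof (ratio_ge1 x (S m) Hx ltac:(lia)).
    pose proof (gauss_pos x (S m) Hx).
    apply Rle_trans with (gauss_seq x 1 * exp (x * (1 + x) * (1 - / INR (S m))) *
         exp (x * (1 + x) / (INR (S m) * INR (S (S m))))).
    { apply Rmult_le_compat; lra. }
    rewrite Rmult_assoc, <- exp_plus. right. f_equal. f_equal.
    pose proof (INR_S_pos m). rewrite (S_INR (S m)). fld. lra.
Qed.

Lemma gauss_growing x : 0 < x -> Un_growing (fun m => gauss_seq x (S m)).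
Proof.
  intros Hx m. rewrite (gauss_step x (S m)) by (auto; lia).
  pose proof (ratio_ge1 x (S m) Hx ltac:(lia)). pose proof (gauss_pos x (S m) Hx).
  rewrite <- (Rmult_1_r (gauss_seq x (S m))) at 1. apply Rmult_le_compat_l; lra.
Qed.

Lemma gauss_cv x : 0 < x -> exists g, Un_cv (gauss_seq x) g.
Proof.
  intros Hx. destruct (growing_cv _ (gauss_growing x Hx)) as [g Hg].
  - exists (gauss_seq x 1 * exp (x * (1 + x))). intros y [m ->].
    eapply Rle_trans; [apply gauss_bound; auto|]. apply Rmult_le_compat_l.
    left; apply gauss_pos; auto. apply exp_mono.
    pose proof (INR_S_pos m). assert (0 < / INR (S m)) by (apply Rinv_0_lt_compat; auto).
    assert (0 < x * (1+x)) by nra. nra.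
  - exists g. apply is_lim_seq_Reals. apply is_lim_seq_incr_1. apply is_lim_seq_Reals. auto.
Qed.

Lemma Gamma_cv x : 0 < x -> Un_cv (gauss_seq x) (Gamma x).
Proof. intros Hx. unfold Gamma. apply epsilon_spec. apply gauss_cv; auto. Qed.

Lemma Gamma_ge_gauss x m : 0 < x -> gauss_seq x (S m) <= Gamma x.
Proof.
  intros Hx. apply (growing_ineq (fun m => gauss_seq x (S m))). apply gauss_growing; auto.
  apply is_lim_seq_Reals. apply (is_lim_seq_incr_1 (gauss_seq x) (Gamma x)).
  apply is_lim_seq_Reals. apply Gamma_cv; auto.
Qed.

Lemma gauss_1 x : 0 < x -> gauss_seq x 1 = / (x * (x + 1)).
Proof.
  intros Hx. unfold gauss_seq. simpl. unfold Rpower. rewrite ln_1, Rmult_0_r, exp_0. fld. lra.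
Qed.

Lemma Gamma_lb x : 0 < x -> / (x * (x + 1)) <= Gamma x.
Proof. intros Hx. rewrite <- gauss_1 by auto. apply (Gamma_ge_gauss x 0 Hx). Qed.

Lemma Gamma_pos x : 0 < x -> 0 < Gamma x.
Proof. intros Hx. eapply Rlt_le_trans; [|apply Gamma_lb; auto].
  apply Rinv_0_lt_compat. nra. Qed.

Lemma prod_shift_succ x n : prod_shift (x + 1) n * x = prod_shift x (S n).
Proof.
  induction n.
  - cbn [prod_shift]. simpl INR. ring.
  - change (prod_shift x (S (S n))) with (prod_shift x (S n) * (x + INR (S (S n)))).
    rewrite <- IHn. cbn [prod_shift]. rewrite !S_INR. ring.
Qed.

Lemma gauss_succ x n : 0 < x -> (1 <= n)%nat ->
  gauss_seq (x + 1) n = gauss_seq x n * (x * INR n / (x + INR (S n))).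
Proof.
  intros Hx Hn. unfold gauss_seq.
  assert (Hn0 : 0 < INR n) by (apply lt_0_INR; lia).
  rewrite Rpower_plus, Rpower_1 by auto.
  pose proof (prod_shift_succ x n).
  assert (Hp : prod_shift (x+1) n = prod_shift x n * (x + INR (S n)) / x).
  { change (prod_shift x n * (x + INR (S n))) with (prod_shift x (S n)). rewrite <- H. field. lra. }
  rewrite Hp. pose proof (prod_shift_pos x n Hx). pose proof (INR_S_pos n).
  fld. repeat split; lra.
Qed.

Lemma is_lim_seq_n_frac x : 0 <= x -> is_lim_seq (fun n => INR n / (x + INR (S n))) 1.
Proof.
  intros Hx.
  apply is_lim_seq_ext with (fun n => 1 - (x+1) * / (x + 1 + INR n)).
  - intros n. pose proof (pos_INR n). rewrite S_INR. fld. lra.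
  - assert (H : is_lim_seq (fun n => / (x + 1 + INR n)) 0).
    { replace (Finite 0) with (Rbar_inv p_infty) by auto.
      apply is_lim_seq_inv; [|discriminate].
      eapply is_lim_seq_plus. apply is_lim_seq_const. apply is_lim_seq_INR. simpl. constructor. }
    pose proof (is_lim_seq_scal_l _ (x+1) _ H) as H2. simpl in H2. rewrite Rmult_0_r in H2.
    replace (Finite 1) with (Finite (1 - 0)) by (f_equal; ring).
    apply is_lim_seq_minus'. apply is_lim_seq_const. exact H2.
Qed.

Lemma Gamma_succ x : 0 < x -> Gamma (x + 1) = x * Gamma x.
Proof.
  intros Hx. apply (UL_sequence (fun n => gauss_seq (x+1) (S n))).
  - apply is_lim_seq_Reals, (is_lim_seq_incr_1 (gauss_seq (x+1)) (Gamma (x+1))),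
      is_lim_seq_Reals, Gamma_cv; lra.
  - apply is_lim_seq_Reals.
    apply is_lim_seq_ext with (fun n => gauss_seq x (S n) * (x * (INR (S n) / (x + INR (S (S n)))))).
    { intros n. rewrite gauss_succ by (auto; lia). f_equal. unfold Rdiv; ring. }
    replace (x * Gamma x) with (Gamma x * (x * 1)) by ring.
    apply is_lim_seq_mult'.
    apply (is_lim_seq_incr_1 (gauss_seq x) (Gamma x)), is_lim_seq_Reals, Gamma_cv; lra.
    apply is_lim_seq_scal_l with (lu := Finite 1).
    apply (is_lim_seq_incr_1 (fun n => INR n / (x + INR (S n))) 1), is_lim_seq_n_frac; lra.
Qed.

Lemma Gamma_nz x : 0 < x -> Gamma x <> 0.
Proof. intros; apply Rgt_not_eq, Gamma_pos; auto. Qed.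

Lemma Rpower_pos x y : 0 < Rpower x y.
Proof. unfold Rpower; apply exp_pos. Qed.

Lemma Gamma_growth rho x0 : 1 <= rho -> 0 < x0 ->
  exists K, 0 < K /\ forall x, x0 <= x -> Rpower rho x <= K * Gamma x.
Proof.
  intros Hr Hx0.
  set (N := S (Z.to_nat (up rho))).
  assert (HN : rho + 1 <= INR N).
  { unfold N. rewrite S_INR, INR_IZR_INZ, Z2Nat.id. pose proof (archimed rho). lra.
    apply le_IZR. pose proof (archimed rho). simpl. lra. }
  set (K := Rpower rho (x0 + INR N) * ((x0 + INR N) * (x0 + INR N + 1))).
  assert (HK : 0 < K).
  { unfold K. apply Rmult_lt_0_compat. apply Rpower_pos. pose proof (pos_INR N). nra. }
  exists K. split; auto.
  assert (base : forall x, x0 <= x <= x0 + INR N -> Rpower rho x <= K * Gamma x).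
  assert (HP : 0 < (x0 + INR N) * (x0 + INR N + 1)).
  { pose proof (pos_INR N). apply Rmult_lt_0_compat; lra. }
  { intros x Hx. pose proof (Gamma_lb x ltac:(lra)).
    assert (Hx1 : / ((x0 + INR N) * (x0 + INR N + 1)) <= / (x * (x + 1))).
    { apply Rinv_le_contravar. apply Rmult_lt_0_compat; lra. apply Rmult_le_compat; lra. }
    unfold K. rewrite Rmult_assoc.
    rewrite <- (Rmult_1_r (Rpower rho x)). apply Rmult_le_compat.
    apply Rlt_le, Rpower_pos. lra. apply Rle_Rpower; lra.
    apply Rle_trans with ((x0 + INR N) * (x0 + INR N + 1) * / ((x0 + INR N) * (x0 + INR N + 1))).
    right. field. lra.
    apply Rmult_le_compat_l; lra. }
  assert (ind : forall m x, x0 <= x <= x0 + INR N + INR m -> Rpower rho x <= K * Gamma x).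
  { induction m; intros x Hx.
    - change (INR 0) with 0 in Hx. apply base; lra.
    - destruct (Rle_dec x (x0 + INR N + INR m)) as [h|h].
      + apply IHm; lra.
      + rewrite S_INR in Hx.
        assert (Hm : x - 1 <= x0 + INR N + INR m) by lra.
        pose proof (pos_INR m).
        assert (Hge : x0 <= x - 1) by lra.
        pose proof (IHm (x-1) ltac:(lra)).
        replace x with ((x - 1) + 1) by ring.
        rewrite Gamma_succ by lra. rewrite Rpower_plus, Rpower_1 by lra.
        assert (rho <= x - 1) by lra.
        pose proof (Rpower_pos rho (x-1)).
        apply Rle_trans with (Rpower rho (x-1) * (x-1)).
        apply Rmult_le_compat_l; lra.
        rewrite (Rmult_comm (x-1)). rewrite <- Rmult_assoc. apply Rmult_le_compat_r; lra. }
  intros x Hx. apply (ind (Z.to_nat (up x))). split; auto.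
  rewrite (INR_IZR_INZ (Z.to_nat (up x))), Z2Nat.id. pose proof (archimed x). pose proof (pos_INR N). lra.
  apply le_IZR. pose proof (archimed x). simpl. lra.
Qed.

Lemma GammaInv_geom a b Y : 0 < a -> 0 < b -> 0 <= Y ->
  exists C, 0 <= C /\ forall k, Y ^ k / Gamma (a * INR k + b) <= C * (/2) ^ k.
Proof.
  intros Ha Hb HY.
  set (rho := Rpower (2 * Y + 1) (/ a)).
  assert (Hrho : 1 <= rho).
  { unfold rho. apply Rle_trans with (Rpower (2*Y+1) 0). rewrite Rpower_O; lra. apply Rle_Rpower. lra.
    left; apply Rinv_0_lt_compat; auto. }
  assert (Hra : Rpower rho a = 2 * Y + 1).
  { unfold rho. rewrite Rpower_mult. rewrite Rinv_l by lra. apply Rpower_1. lra. }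
  destruct (Gamma_growth rho b Hrho Hb) as [K [HK HG]].
  exists (K / Rpower rho b). split. left. apply Rdiv_lt_0_compat; auto. apply Rpower_pos.
  intros k.
  assert (Hx : b <= a * INR k + b) by (pose proof (pos_INR k); nra).
  pose proof (HG _ Hx) as H1. pose proof (Gamma_pos (a * INR k + b) ltac:(lra)) as HGp.
  rewrite Rpower_plus in H1. rewrite <- Rpower_mult, Hra in H1.
  rewrite Rpower_pow in H1 by lra.
  pose proof (Rpower_pos rho b).
  assert (Hpow : Y ^ k * 2 ^ k <= (2 * Y + 1) ^ k).
  { rewrite <- Rpow_mult_distr. apply pow_incr. nra. }
  apply Rle_trans with (Y ^ k * (K / (Rpower rho b * (2*Y+1)^k))).
  { unfold Rdiv. apply Rmult_le_compat_l. apply pow_le; auto.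
    rewrite <- (Rmult_1_l (/ Gamma _)).
    assert (0 < (2*Y+1)^k) by (apply pow_lt; lra).
    apply (Rmult_le_reg_r (Gamma (a * INR k + b))); auto.
    rewrite Rmult_assoc, Rinv_l, Rmult_1_r by lra.
    apply (Rmult_le_reg_l (Rpower rho b * (2*Y+1)^k)). nra.
    rewrite Rmult_1_r. field_simplify. lra. nra. }
  rewrite pow_inv. unfold Rdiv.
  assert (0 < (2*Y+1)^k) by (apply pow_lt; lra).
  assert (0 < 2^k) by (apply pow_lt; lra).
  rewrite Rinv_mult.
  apply Rle_trans with (K * / Rpower rho b * (Y ^ k * / (2 * Y + 1) ^ k)).
  right; ring.
  apply Rmult_le_compat_l. apply Rmult_le_pos; [lra| left; apply Rinv_0_lt_compat; auto].
  apply Rle_trans with ((Y^k * 2^k) * / (2*Y+1)^k * / 2^k).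
  right. field. lra.
  apply Rle_trans with ((2*Y+1)^k * / (2*Y+1)^k * / 2^k).
  apply Rmult_le_compat_r. left; apply Rinv_0_lt_compat; lra.
  apply Rmult_le_compat_r. left; apply Rinv_0_lt_compat; lra. lra.
  right. field. lra.
Qed.

Lemma sum_inf_eq f l : infinite_sum f l -> sum_inf f = l.
Proof.
  intros H. unfold sum_inf. apply (uniqueness_sum f); auto.
  apply epsilon_spec. exists l; auto.
Qed.

Lemma sum_inf_is f l : is_series f l -> sum_inf f = l.
Proof. intros H; apply sum_inf_eq, is_series_Reals; auto. Qed.

Lemma poch_nonneg g k : 0 <= g -> 0 <= poch g k.
Proof. intros Hg; induction k; simpl; [lra|]. pose proof (pos_INR k). nra. Qed.

Lemma poch_fact_le g k : 0 <= g -> poch g k / INR (fact k) <= (g + 1) ^ k.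
Proof.
  intros Hg. induction k.
  - simpl. lra.
  - cbn [poch]. rewrite fact_simpl, mult_INR. simpl pow.
    pose proof (lt_0_INR _ (lt_O_fact k)). pose proof (pos_INR k).
    pose proof (poch_nonneg g k Hg).
    assert (E : poch g k * (g + INR k) / (INR (S k) * INR (fact k)) =
               (poch g k / INR (fact k)) * ((g + INR k) / INR (S k))).
    { rewrite S_INR. field. lra. }
    rewrite E. rewrite Rmult_comm. apply Rmult_le_compat.
    apply Rmult_le_pos. lra. left; apply Rinv_0_lt_compat; rewrite S_INR; lra.
    apply Rmult_le_pos; [lra| left; apply Rinv_0_lt_compat; lra].
    rewrite S_INR. apply (Rmult_le_reg_r (INR k + 1)). lra.
    unfold Rdiv. rewrite Rmult_assoc, Rinv_l, Rmult_1_r by lra. nra.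
    auto.
Qed.

Lemma half_pow_le1 k : (/2)^k <= 1.
Proof. induction k; simpl; lra. Qed.

Definition mlc (a b g : R) (k : nat) : R :=
  poch g k / (Gamma (a * INR k + b) * INR (fact k)).

Lemma mlc_nonneg a b g k : 0 < a -> 0 < b -> 0 <= g -> 0 <= mlc a b g k.
Proof.
  intros. unfold mlc. apply Rmult_le_pos. apply poch_nonneg; auto.
  left. apply Rinv_0_lt_compat. apply Rmult_lt_0_compat.
  apply Gamma_pos. pose proof (pos_INR k). nra. apply lt_0_INR, lt_O_fact.
Qed.

Lemma mlc_geom a b g X : 0 < a -> 0 < b -> 0 <= g -> 0 <= X ->
  exists C, 0 <= C /\ forall k, mlc a b g k * X ^ k <= C * (/2) ^ k.
Proof.
  intros Ha Hb Hg HX.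
  destruct (GammaInv_geom a b ((g+1) * X) Ha Hb ltac:(nra)) as [C [HC HCb]].
  exists C. split; auto. intros k. eapply Rle_trans; [|apply HCb].
  unfold mlc. rewrite Rpow_mult_distr.
  pose proof (Gamma_pos (a * INR k + b) ltac:(pose proof (pos_INR k); nra)).
  pose proof (lt_0_INR _ (lt_O_fact k)).
  pose proof (poch_fact_le g k Hg).
  assert (E : poch g k / (Gamma (a * INR k + b) * INR (fact k)) * X ^ k
    = (poch g k / INR (fact k)) * (X ^ k / Gamma (a * INR k + b))) by (field; lra).
  rewrite E. apply Rle_trans with ((g+1)^k * (X^k / Gamma (a * INR k + b))).
  apply Rmult_le_compat_r; auto. apply Rmult_le_pos. apply pow_le; lra.
  left; apply Rinv_0_lt_compat; lra.
  right; unfold Rdiv; ring.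
Qed.

Lemma mlc_abs_series a b g x : 0 < a -> 0 < b -> 0 <= g ->
  ex_series (fun k => Rabs (mlc a b g k * x ^ k)).
Proof.
  intros Ha Hb Hg.
  destruct (mlc_geom a b g (Rabs x) Ha Hb Hg (Rabs_pos x)) as [C [HC HCb]].
  apply (@ex_series_le R_AbsRing R_CompleteNormedModule _ (fun k => C * (/2)^k)).
  - intros k. unfold norm; simpl. unfold abs; simpl. rewrite Rabs_Rabsolu.
    rewrite Rabs_mult, <- RPow_abs, (Rabs_pos_eq (mlc a b g k)) by (apply mlc_nonneg; auto).
    apply HCb.
  - assert (Hg2 : Rabs (/2) < 1) by (rewrite Rabs_pos_eq; lra).
    exact (@ex_series_scal_l R_AbsRing R_CompleteNormedModule C (fun k => (/2)^k) (ex_series_geom (/2) Hg2)).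
Qed.

Lemma mlc_radius a b g x : 0 < a -> 0 < b -> 0 <= g ->
  Rbar_lt (Rabs x) (CV_radius (mlc a b g)).
Proof.
  intros Ha Hb Hg.
  destruct (CV_radius_bounded (mlc a b g)) as [Hub _].
  apply Rbar_lt_le_trans with (Rabs x + 1). simpl. lra.
  apply Hub.
  destruct (mlc_geom a b g (Rabs x + 1) Ha Hb Hg ltac:(pose proof (Rabs_pos x); lra)) as [C [HC HCb]].
  exists C. intros k. rewrite Rabs_mult, <- RPow_abs, (Rabs_pos_eq (mlc a b g k)) by (apply mlc_nonneg; auto).
  rewrite (Rabs_pos_eq (Rabs x + 1)) by (pose proof (Rabs_pos x); lra).
  eapply Rle_trans; [apply HCb|]. rewrite <- (Rmult_1_r C) at 2. apply Rmult_le_compat_l; auto.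
  apply half_pow_le1.
Qed.

Lemma is_series_ext_R (a b : nat -> R) (l : R) :
  (forall n, a n = b n) -> is_series a l -> is_series b l.
Proof. intros H. apply is_series_ext. exact H. Qed.

Lemma ML3_PSeries a b g x : 0 < a -> 0 < b -> 0 <= g ->
  ML3 a b g x = PSeries (mlc a b g) x.
Proof.
  intros Ha Hb Hg. unfold ML3. apply sum_inf_is. unfold PSeries.
  apply is_series_ext_R with (fun k => mlc a b g k * x ^ k).
  { intros k. unfold mlc. field. split.
    apply not_0_INR, fact_neq_0. apply Rgt_not_eq, Gamma_pos. pose proof (pos_INR k); nra. }
  apply Series_correct. apply ex_series_Rabs. apply mlc_abs_series; auto.
Qed.


Lemma tri_sum (c : nat -> nat -> R) N :
  sum_f_R0 (fun j => sum_f_R0 (fun n => c n (j - n)%nat) j) N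
  = sum_f_R0 (fun n => sum_f_R0 (c n) (N - n)%nat) N.
Proof.
  induction N.
  - simpl. reflexivity.
  - rewrite tech5, IHN. rewrite (tech5 (fun n => sum_f_R0 (c n) (S N - n))).
    rewrite (tech5 (fun n => c n (S N - n)%nat)).
    replace (S N - S N)%nat with 0%nat by lia. simpl (sum_f_R0 (c (S N)) 0).
    rewrite (sum_eq (fun n => sum_f_R0 (c n) (S N - n)) (fun n => sum_f_R0 (c n) (N - n) + c n (S N - n)%nat)).
    + rewrite sum_plus. ring.
    + intros i Hi. replace (S N - i)%nat with (S (N - i)) by lia. rewrite tech5. reflexivity.
Qed.

Lemma sum_minus_f (f g : nat -> R) N :
  sum_f_R0 (fun n => f n - g n) N = sum_f_R0 f N - sum_f_R0 g N.
Proof. induction N; simpl; try rewrite IHN; ring. Qed.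

Lemma sum_scal_l (f : nat -> R) c N :
  sum_f_R0 (fun n => c * f n) N = c * sum_f_R0 f N.
Proof. induction N; simpl; try rewrite IHN; ring. Qed.

Lemma sum_nonneg (f : nat -> R) N : (forall n, 0 <= f n) -> 0 <= sum_f_R0 f N.
Proof. intros H. induction N; simpl; auto. specialize (H (S N)). lra. Qed.

Lemma sum_le_lim (f : nat -> R) L N : (forall n, 0 <= f n) -> infinite_sum f L -> sum_f_R0 f N <= L.
Proof.
  intros Hf HL. apply Rnot_lt_le. intros Hc.
  destruct (HL (sum_f_R0 f N - L) ltac:(lra)) as [N0 HN0].
  specialize (HN0 (max N0 N) ltac:(lia)). unfold Rdist in HN0.
  assert (sum_f_R0 f N <= sum_f_R0 f (max N0 N)).
  { assert (forall k, sum_f_R0 f N <= sum_f_R0 f (N + k)).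
    { induction k. rewrite Nat.add_0_r; lra. rewrite Nat.add_succ_r, tech5. specialize (Hf (S (N+k))). lra. }
    replace (max N0 N) with (N + (max N0 N - N))%nat by lia. apply H. }
  apply Rabs_def2 in HN0. lra.
Qed.

Lemma sum_tail_ind (u : nat -> R) M N : (M <= N)%nat ->
  sum_f_R0 (fun n => if Nat.leb n M then 0 else u n) N = sum_f_R0 u N - sum_f_R0 u M.
Proof.
  intros H. induction H.
  - rewrite (sum_eq _ (fun _ => 0)). 2: { intros i Hi. replace (Nat.leb i M) with true. auto. symmetry; apply Nat.leb_le; lia. }
    clear. induction M; simpl; try rewrite IHM; ring.
  - rewrite !tech5, IHle. replace (Nat.leb (S m) M) with false. ring.
    symmetry; apply Nat.leb_gt; lia.
Qed.

Lemma partial_diff_bound (f g : nat -> R) m K : (m <= K)%nat ->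
  (forall k, Rabs (f k) <= g k) ->
  Rabs (sum_f_R0 f K - sum_f_R0 f m) <= sum_f_R0 g K - sum_f_R0 g m.
Proof.
  intros H Hfg. induction H.
  - rewrite !Rminus_diag, Rabs_R0. lra.
  - rewrite !tech5. specialize (Hfg (S m0)).
    replace (sum_f_R0 f m0 + f (S m0) - sum_f_R0 f m) with ((sum_f_R0 f m0 - sum_f_R0 f m) + f (S m0)) by ring.
    eapply Rle_trans; [apply Rabs_triang|]. lra.
Qed.

Lemma tail_bound (f g : nat -> R) lf lg m :
  (forall k, Rabs (f k) <= g k) -> infinite_sum f lf -> infinite_sum g lg ->
  Rabs (lf - sum_f_R0 f m) <= lg - sum_f_R0 g m.
Proof.
  intros Hfg Hf Hg. apply Rnot_lt_le. intros Hc.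
  set (e := (Rabs (lf - sum_f_R0 f m) - (lg - sum_f_R0 g m)) / 3).
  assert (He : 0 < e) by (unfold e; lra).
  destruct (Hf e He) as [N1 H1]. destruct (Hg e He) as [N2 H2].
  set (K := max m (max N1 N2)).
  specialize (H1 K ltac:(unfold K; lia)). specialize (H2 K ltac:(unfold K; lia)).
  unfold Rdist in H1, H2.
  pose proof (partial_diff_bound f g m K ltac:(unfold K; lia) Hfg).
  assert (Rabs (lf - sum_f_R0 f m) <= Rabs (sum_f_R0 f K - lf) + Rabs (sum_f_R0 f K - sum_f_R0 f m)).
  { replace (lf - sum_f_R0 f m) with (-(sum_f_R0 f K - lf) + (sum_f_R0 f K - sum_f_R0 f m)) by ring.
    eapply Rle_trans; [apply Rabs_triang|]. rewrite Rabs_Ropp. lra. }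
  apply Rabs_def2 in H2. unfold e in *. lra.
Qed.

Lemma series_diag (c : nat -> nat -> R) (u v r : nat -> R) U V L :
  (forall n, 0 <= u n) -> (forall k, 0 <= v k) ->
  infinite_sum u U -> infinite_sum v V ->
  (forall n k, Rabs (c n k) <= u n * v k) ->
  (forall n, infinite_sum (c n) (r n)) ->
  infinite_sum (fun j => sum_f_R0 (fun n => c n (j - n)%nat) j) L ->
  infinite_sum r L.
Proof.
  intros Hu Hv HU HV Hc Hr HD.
  assert (HU0 : 0 <= U) by (eapply Rle_trans; [apply (sum_nonneg u 0); auto| apply sum_le_lim; auto]).
  assert (HV0 : 0 <= V) by (eapply Rle_trans; [apply (sum_nonneg v 0); auto| apply sum_le_lim; auto]).
  set (Vt m := V - sum_f_R0 v m).
  assert (HVt0 : forall m, 0 <= Vt m) by (intros m; unfold Vt; pose proof (sum_le_lim v V m Hv HV); lra).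
  assert (HVtV : forall m, Vt m <= V) by (intros m; unfold Vt; pose proof (sum_nonneg v m Hv); lra).
  assert (Htail : forall n m, Rabs (r n - sum_f_R0 (c n) m) <= u n * Vt m).
  { intros n m. unfold Vt.
    assert (Hs : forall k, sum_f_R0 (fun i => u n * v i) k = u n * sum_f_R0 v k).
    { intros; rewrite scal_sum; apply sum_eq; intros; ring. }
    assert (infinite_sum (fun k => u n * v k) (u n * V)).
    { intros e He. destruct (Req_dec (u n) 0) as [h|h].
      - exists 0%nat. intros N _. unfold Rdist. rewrite Hs, h.
        rewrite Rmult_0_l, Rmult_0_l, Rminus_0_r, Rabs_R0. lra.
      - assert (0 < u n) by (specialize (Hu n); lra).
        destruct (HV (e / u n) ltac:(apply Rdiv_lt_0_compat; lra)) as [N HN].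
        exists N. intros k Hk. specialize (HN k Hk). unfold Rdist in *. rewrite Hs.
        replace (u n * sum_f_R0 v k - u n * V) with (u n * (sum_f_R0 v k - V)) by ring.
        rewrite Rabs_mult, (Rabs_pos_eq (u n)) by lra.
        apply (Rmult_lt_compat_l (u n)) in HN; auto.
        replace (u n * (e / u n)) with e in HN by (field; lra). lra. }
    eapply Rle_trans. apply (tail_bound (c n) (fun k => u n * v k)); eauto.
    rewrite Hs. right; ring. }
  intros e He.
  set (e' := e / (2 * (U + V + 1))).
  assert (He' : 0 < e') by (unfold e'; apply Rdiv_lt_0_compat; lra).
  destruct (HU e' He') as [M HM].
  assert (HVlim : exists K0, forall m, (m >= K0)%nat -> Vt m < e').
  { destruct (HV e' He') as [K0 HK0]. exists K0. intros m Hm. specialize (HK0 m Hm).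
    unfold Rdist in HK0. apply Rabs_def2 in HK0. unfold Vt. lra. }
  destruct HVlim as [K0 HK0].
  destruct (HD (e/2) ltac:(lra)) as [N0 HN0].
  exists (max N0 (M + K0)). intros N HN. unfold Rdist.
  specialize (HN0 N ltac:(lia)). unfold Rdist in HN0.
  rewrite tri_sum in HN0.
  assert (HE : Rabs (sum_f_R0 r N - sum_f_R0 (fun n => sum_f_R0 (c n) (N - n)) N) <= e / 2).
  { replace (sum_f_R0 r N - sum_f_R0 (fun n => sum_f_R0 (c n) (N - n)) N)
      with (sum_f_R0 (fun n => r n - sum_f_R0 (c n) (N - n)) N).
    2: { apply sum_minus_f. }
    eapply Rle_trans; [apply Rsum_abs|].
    apply Rle_trans with (sum_f_R0 (fun n => e' * u n + V * (if Nat.leb n M then 0 else u n)) N).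
    { apply sum_Rle. intros n Hn. eapply Rle_trans; [apply Htail|].
      destruct (Nat.leb n M) eqn:E.
      - apply Nat.leb_le in E. specialize (HK0 (N - n)%nat ltac:(lia)).
        specialize (Hu n). nra.
      - specialize (HVtV (N - n)%nat). specialize (Hu n). nra. }
    rewrite sum_plus, !sum_scal_l.
    rewrite sum_tail_ind by lia.
    pose proof (sum_le_lim u U N Hu HU).
    specialize (HM M ltac:(lia)). unfold Rdist in HM. apply Rabs_def2 in HM.
    assert (e' * U + V * e' <= e / 2).
    { unfold e'. apply (Rmult_le_reg_r (2 * (U + V + 1))). lra.
      field_simplify; lra. }
    assert (e' * sum_f_R0 u N <= e' * U) by (apply Rmult_le_compat_l; lra).
    assert (V * (sum_f_R0 u N - sum_f_R0 u M) <= V * e') by (apply Rmult_le_compat_l; lra).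
    lra. }
  replace (sum_f_R0 r N - L) with ((sum_f_R0 r N - sum_f_R0 (fun n => sum_f_R0 (c n) (N - n)) N)
     + (sum_f_R0 (fun n => sum_f_R0 (c n) (N - n)) N - L)) by ring.
  eapply Rle_lt_trans; [apply Rabs_triang|]. lra.
Qed.

Lemma fact_pos n : 0 < INR (fact n).
Proof. apply lt_0_INR, lt_O_fact. Qed.

Lemma poch_add g n k : poch g (n + k) = poch g n * poch (g + INR n) k.
Proof.
  induction k.
  - rewrite Nat.add_0_r. simpl. ring.
  - rewrite Nat.add_succ_r. cbn [poch]. rewrite IHk, plus_INR. ring.
Qed.

Lemma term_le_sum (f : nat -> R) i N : (i <= N)%nat -> (forall n, 0 <= f n) -> f i <= sum_f_R0 f N.
Proof.
  intros H Hf. induction H.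
  - destruct i. simpl; lra. rewrite tech5. pose proof (sum_nonneg f i Hf). lra.
  - rewrite tech5. specialize (Hf (S m)). lra.
Qed.

Lemma C_nonneg N i : 0 <= Binomial.C N i.
Proof. unfold Binomial.C. apply Rmult_le_pos. left; apply fact_pos. left; apply Rinv_0_lt_compat, Rmult_lt_0_compat; apply fact_pos. Qed.

Lemma C_le_pow N i : (i <= N)%nat -> Binomial.C N i <= 2 ^ N.
Proof.
  intros H. replace 2 with (1 + 1) by ring. rewrite binomial.
  eapply Rle_trans; [|apply (term_le_sum (fun i0 => Binomial.C N i0 * 1 ^ i0 * 1 ^ (N - i0)) i N H)].
  rewrite !pow1. lra. intros n. rewrite !pow1. rewrite !Rmult_1_r. apply C_nonneg.
Qed.

Lemma n_le_pow2 n : INR n <= 2 ^ n.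
Proof. induction n. simpl; lra. rewrite S_INR. simpl. assert (1 <= 2^n) by (clear; induction n; simpl; lra). lra. Qed.

Lemma inv_fact_prod n k : INR n / (INR (fact n) * INR (fact k)) <= 2 ^ (n + k) * 2 ^ (n+k) / INR (fact (n + k)).
Proof.
  pose proof (C_le_pow (n+k) n ltac:(lia)). unfold Binomial.C in H.
  replace (n + k - n)%nat with k in H by lia.
  pose proof (fact_pos n). pose proof (fact_pos k). pose proof (fact_pos (n+k)).
  assert (INR n <= 2 ^ (n+k)).
  { eapply Rle_trans. apply n_le_pow2. apply Rle_pow. lra. lia. }
  apply Rle_trans with (INR n * (INR (fact (n + k)) / (INR (fact n) * INR (fact k))) / INR (fact (n+k))).
  - right. field. lra.
  - unfold Rdiv. apply Rmult_le_compat_r. left; apply Rinv_0_lt_compat; lra.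
    apply Rmult_le_compat; try lra. apply pos_INR.
    apply Rmult_le_pos; [lra| left; apply Rinv_0_lt_compat, Rmult_lt_0_compat; lra].
Qed.

Lemma Rpower_split t e a j : 0 < t -> Rpower t (e + INR j * a) = Rpower t e * (Rpower t a) ^ j.
Proof.
  intros Ht. rewrite Rpower_plus. f_equal. rewrite <- Rpower_pow by (apply Rpower_pos).
  rewrite Rpower_mult. f_equal. ring.
Qed.

Definition Qt (a : R) (l : nat) (t : R) (j : nat) : R :=
  Rpower t ((INR j + INR l) * a - 1) * poch (INR l) j / Gamma (a * INR j + a * INR l).

Definition cterm (a : R) (l : nat) (t : R) (n k : nat) : R :=
  INR n * (poch (INR l) n / INR (fact n) * Rpower t ((INR n + INR l) * a - 1))
  * (mlc a ((INR n + INR l) * a) (INR n + INR l) k * (- Rpower t a) ^ k).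


Lemma cterm_eq a l t n k : 0 < a -> (1 <= l)%nat -> 0 < t ->
  cterm a l t n k = Qt a l t (n + k) * (INR n * (-1) ^ k / (INR (fact n) * INR (fact k))).
Proof.
  intros Ha Hl Ht. unfold cterm, Qt, mlc.
  assert (Hl0 : 0 < INR l) by (apply lt_0_INR; lia).
  pose proof (pos_INR n). pose proof (pos_INR k).
  rewrite poch_add.
  replace ((INR (n + k) + INR l) * a - 1) with (((INR n + INR l) * a - 1) + INR k * a) by (rewrite plus_INR; ring).
  rewrite Rpower_split by auto.
  replace (a * INR (n + k) + a * INR l) with (a * INR k + (INR n + INR l) * a) by (rewrite plus_INR; ring).
  replace (- Rpower t a) with ((-1) * Rpower t a) by ring. rewrite Rpow_mult_distr.
  rewrite (Rplus_comm (INR l) (INR n)).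
  pose proof (fact_pos n). pose proof (fact_pos k).
  pose proof (Gamma_pos (a * INR k + (INR n + INR l) * a) ltac:(nra)).
  field. lra.
Qed.

Lemma Qt_pos a l t j : 0 < a -> (1 <= l)%nat -> 0 < t -> 0 <= Qt a l t j.
Proof.
  intros Ha Hl Ht. unfold Qt. assert (Hl0 : 0 < INR l) by (apply lt_0_INR; lia).
  pose proof (pos_INR j).
  apply Rmult_le_pos. apply Rmult_le_pos. left; apply Rpower_pos. apply poch_nonneg; lra.
  left; apply Rinv_0_lt_compat, Gamma_pos; nra.
Qed.

Lemma cterm_bound a l t : 0 < a -> (1 <= l)%nat -> 0 < t ->
  exists C0, 0 <= C0 /\ forall n k,
  Rabs (cterm a l t n k) <= (Rpower t (INR l * a - 1) * C0 * (/2) ^ n) * (/2) ^ k.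
Proof.
  intros Ha Hl Ht. assert (Hl0 : 0 < INR l) by (apply lt_0_INR; lia).
  set (T := Rpower t a). assert (HT : 0 < T) by apply Rpower_pos.
  destruct (GammaInv_geom a (a * INR l) (4 * (INR l + 1) * T) Ha ltac:(nra) ltac:(nra)) as [C0 [HC0 HCb]].
  exists C0. split; auto. intros n k.
  rewrite cterm_eq by auto. set (j := (n + k)%nat).
  rewrite Rabs_mult, (Rabs_pos_eq (Qt a l t j)) by (apply Qt_pos; auto).
  assert (Hq : Rabs (INR n * (-1) ^ k / (INR (fact n) * INR (fact k))) = INR n / (INR (fact n) * INR (fact k))).
  { unfold Rdiv. rewrite !Rabs_mult, <- RPow_abs, Rabs_m1, pow1, Rabs_pos_eq by apply pos_INR.
    rewrite Rabs_pos_eq. ring. left; apply Rinv_0_lt_compat, Rmult_lt_0_compat; apply fact_pos. }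
  rewrite Hq. clear Hq.
  pose proof (inv_fact_prod n k) as Hif. fold j in Hif.
  pose proof (poch_fact_le (INR l) j ltac:(lra)) as Hp.
  pose proof (HCb j) as HG.
  pose proof (fact_pos j). pose proof (pos_INR j).
  assert (HGp : 0 < Gamma (a * INR j + a * INR l)) by (apply Gamma_pos; nra).
  unfold Qt.
  replace ((INR j + INR l) * a - 1) with ((INR l * a - 1) + INR j * a) by ring.
  rewrite Rpower_split by auto. fold T.
  assert (HRp : 0 < Rpower t (INR l * a - 1)) by apply Rpower_pos.
  assert (Hpo : 0 <= poch (INR l) j) by (apply poch_nonneg; lra).
  assert (Hpj : poch (INR l) j <= (INR l + 1) ^ j * INR (fact j)).
  { apply (Rmult_le_reg_r (/ INR (fact j))). apply Rinv_0_lt_compat; lra.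
    rewrite Rmult_assoc, Rinv_r, Rmult_1_r by lra. exact Hp. }
  replace (Rpower t (INR l * a - 1) * C0 * (/2)^n * (/2)^k) with (Rpower t (INR l*a-1) * (C0 * (/2)^j)) by (unfold j; rewrite pow_add; ring).
  apply Rle_trans with (Rpower t (INR l * a - 1) * ((4 * (INR l + 1) * T) ^ j / Gamma (a * INR j + a * INR l))).
  2: { apply Rmult_le_compat_l; lra. }
  assert (H4 : (4 * (INR l + 1) * T) ^ j = (2 ^ j * 2 ^ j) * (INR l + 1) ^ j * T ^ j).
  { replace 4 with (2*2) by ring. rewrite !Rpow_mult_distr. ring. }
  rewrite H4.
  set (G := Gamma (a * INR j + a * INR l)).
  set (P := poch (INR l) j). set (Fj := INR (fact j)).
  assert (HPQ : P * (INR n / (INR (fact n) * INR (fact k))) <= (2 ^ j * 2 ^ j) * (INR l + 1) ^ j).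
  { apply Rle_trans with ((INR l + 1) ^ j * Fj * (2 ^ j * 2 ^ j / Fj)).
    apply Rmult_le_compat; auto. apply Rmult_le_pos. apply pos_INR.
    left; apply Rinv_0_lt_compat, Rmult_lt_0_compat; apply fact_pos.
    right. unfold Fj. field. lra. }
  assert (0 < / G) by (apply Rinv_0_lt_compat; auto).
  assert (0 <= T ^ j) by (apply pow_le; lra).
  apply Rle_trans with (Rpower t (INR l * a - 1) * T ^ j * / G * (P * (INR n / (INR (fact n) * INR (fact k))))).
  right. unfold Rdiv. ring.
  apply Rle_trans with (Rpower t (INR l * a - 1) * T ^ j * / G * ((2 ^ j * 2 ^ j) * (INR l + 1) ^ j)).
  apply Rmult_le_compat_l; auto. apply Rmult_le_pos; [apply Rmult_le_pos|]; lra.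
  right. unfold Rdiv. ring.
Qed.

Lemma comb_sum j :
  sum_f_R0 (fun n => INR n * (-1) ^ (j - n) / (INR (fact n) * INR (fact (j - n)))) j
  = if Nat.eqb j 1 then 1 else 0.
Proof.
  destruct j.
  - simpl. field.
  - rewrite decomp_sum by lia. simpl pred.
    rewrite (sum_eq _ (fun m => / INR (fact j) * (Binomial.C j m * 1 ^ m * (-1) ^ (j - m)))).
    2: { intros m Hm. replace (S j - S m)%nat with (j - m)%nat by lia. unfold Binomial.C.
         rewrite fact_simpl, mult_INR, pow1.
         pose proof (fact_pos m). pose proof (fact_pos j). pose proof (fact_pos (j - m)).
         pose proof (INR_S_pos m). field. repeat split; lra. }
    rewrite sum_scal_l, <- binomial.
    replace (1 + -1) with 0 by ring.
    simpl (INR 0 * _). rewrite Rmult_0_l, Rdiv_0_l, Rplus_0_l.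
    destruct j.
    + simpl. field.
    + rewrite pow_i by lia. simpl. ring.
Qed.

Lemma diag_eq a l t j : 0 < a -> (1 <= l)%nat -> 0 < t ->
  sum_f_R0 (fun n => cterm a l t n (j - n)) j = if Nat.eqb j 1 then Qt a l t 1 else 0.
Proof.
  intros Ha Hl Ht.
  rewrite (sum_eq _ (fun n => Qt a l t j * (INR n * (-1) ^ (j - n) / (INR (fact n) * INR (fact (j - n)))))).
  2: { intros i Hi. rewrite cterm_eq by auto. replace (i + (j - i))%nat with j by lia. reflexivity. }
  rewrite sum_scal_l, comb_sum. destruct (Nat.eqb j 1) eqn:E.
  apply Nat.eqb_eq in E. subst. ring. ring.
Qed.

Lemma diag_sum a l t : 0 < a -> (1 <= l)%nat -> 0 < t ->
  infinite_sum (fun j => sum_f_R0 (fun n => cterm a l t n (j - n)) j) (Qt a l t 1).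
Proof.
  intros Ha Hl Ht e He. exists 1%nat. intros N HN. unfold Rdist.
  rewrite (sum_eq _ (fun j => if Nat.eqb j 1 then Qt a l t 1 else 0)).
  2: { intros i _. apply diag_eq; auto. }
  assert (forall N, (1 <= N)%nat -> sum_f_R0 (fun j => if Nat.eqb j 1 then Qt a l t 1 else 0) N = Qt a l t 1).
  { intros M HM. induction HM. simpl. ring. rewrite tech5, IHHM.
    replace (Nat.eqb (S m) 1) with false. ring. symmetry. apply Nat.eqb_neq. lia. }
  rewrite H by auto. rewrite Rminus_diag, Rabs_R0. auto.
Qed.

Lemma is_series_scal_R (f : nat -> R) c L : is_series f L -> is_series (fun k => c * f k) (c * L).
Proof. intros H. apply (@is_series_scal_l R_AbsRing R_NormedModule c f L H). Qed.

Lemma ML3_is_series a b g x : 0 < a -> 0 < b -> 0 <= g ->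
  is_series (fun k => mlc a b g k * x ^ k) (ML3 a b g x).
Proof.
  intros Ha Hb Hg. rewrite ML3_PSeries by auto. unfold PSeries.
  apply Series_correct. apply ex_series_Rabs. apply mlc_abs_series; auto.
Qed.

Lemma row_sum a l t n : 0 < a -> (1 <= l)%nat -> 0 < t ->
  infinite_sum (cterm a l t n) (INR n * Pnal a l n t).
Proof.
  intros Ha Hl Ht. apply is_series_Reals. unfold cterm, Pnal.
  assert (Hl0 : 0 < INR l) by (apply lt_0_INR; lia). pose proof (pos_INR n).
  replace (INR n * (poch (INR l) n / INR (fact n) * Rpower t ((INR n + INR l) * a - 1) *
     ML3 a ((INR n + INR l) * a) (INR n + INR l) (- Rpower t a)))
   with ((INR n * (poch (INR l) n / INR (fact n) * Rpower t ((INR n + INR l) * a - 1))) *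
     ML3 a ((INR n + INR l) * a) (INR n + INR l) (- Rpower t a)) by ring.
  apply is_series_scal_R. apply ML3_is_series; nra.
Qed.

Lemma Qt1_eq a l t : Qt a l t 1 = INR l * Rpower t (INR l * a + a - 1) / Gamma ((INR l + 1) * a).
Proof.
  unfold Qt. simpl poch. simpl INR.
  replace ((1 + INR l) * a - 1) with (INR l * a + a - 1) by ring.
  replace (a * 1 + a * INR l) with ((INR l + 1) * a) by ring.
  replace (1 * (INR l + 0)) with (INR l) by ring. unfold Rdiv. ring.
Qed.

Lemma infsum_ext (f g : nat -> R) l : (forall n, f n = g n) -> infinite_sum f l -> infinite_sum g l.
Proof.
  intros E H e He. destruct (H e He) as [N HN]. exists N. intros n Hn.
  rewrite (sum_eq g f) by (intros; symmetry; auto). auto.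
Qed.

Theorem part1 a l t : 0 < a -> (1 <= l)%nat -> 0 < t ->
  infinite_sum (fun n => INR n * Pnal a l n t)
    (INR l * Rpower t (INR l * a + a - 1) / Gamma ((INR l + 1) * a)).
Proof.
  intros Ha Hl Ht. rewrite <- Qt1_eq.
  destruct (cterm_bound a l t Ha Hl Ht) as [C0 [HC0 Hb]].
  pose proof (Rpower_pos t (INR l * a - 1)).
  assert (Hg : forall c, 0 <= c -> infinite_sum (fun n => c * (/2) ^ n) (c * 2)).
  { intros c Hc. pose proof (GP_infinite (/2) ltac:(rewrite Rabs_pos_eq; lra)). unfold Pser in H0.
    replace (c * 2) with (c * / (1 - /2)) by field.
    intros e He. destruct (Req_dec c 0) as [h|h].
    - exists 0%nat. intros. unfold Rdist. subst c. rewrite sum_scal_l. rewrite !Rmult_0_l. rewrite Rminus_0_r, Rabs_R0. lra.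
    - destruct (H0 (e / c) ltac:(apply Rdiv_lt_0_compat; lra)) as [N HN]. exists N. intros n Hn.
      specialize (HN n Hn). unfold Rdist in *. rewrite sum_scal_l.
      cbv beta in HN.
      assert (Es : sum_f_R0 (fun i => 1 * (/2)^i) n = sum_f_R0 (pow (/2)) n) by (apply sum_eq; intros; ring).
      rewrite Es in HN.
      replace (c * sum_f_R0 (pow (/2)) n - c * / (1 - / 2)) with (c * (sum_f_R0 (pow (/2)) n - / (1 - /2))) by ring.
      rewrite Rabs_mult, Rabs_pos_eq by lra.
      apply (Rmult_lt_compat_l c) in HN; [|lra]. replace (c * (e / c)) with e in HN by (field; lra). lra. }
  apply (series_diag (cterm a l t) (fun n => Rpower t (INR l * a - 1) * C0 * (/2) ^ n) (fun k => (/2) ^ k) _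
           (Rpower t (INR l * a - 1) * C0 * 2) (1 * 2)).
  - intros n. apply Rmult_le_pos. apply Rmult_le_pos; lra. apply pow_le; lra.
  - intros k. apply pow_le; lra.
  - apply Hg. apply Rmult_le_pos; lra.
  - apply (infsum_ext (fun k => 1 * (/2)^k)). intros; ring. apply Hg; lra.
  - intros n k. apply Hb.
  - intros n. apply row_sum; auto.
  - apply diag_sum; auto.
Qed.

Lemma m_al_closed a l s : 0 < a -> (1 <= l)%nat -> 0 < s ->
  m_al a l s = INR l * Rpower s (INR l * a + a - 1) / Gamma ((INR l + 1) * a).
Proof. intros. unfold m_al. apply sum_inf_eq. apply part1; auto. Qed.

Theorem part3 a l t : 0 < a -> (1 <= l)%nat -> 0 < t ->
  derivable_pt_lim
       (fun k => Rpower t (a * INR l - 1)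
                 * ML3 a (a * INR l) (INR l) (- (1 - exp (- k)) * Rpower t a))
       0 (- m_al a l t).
Proof.
  intros Ha Hl Ht. assert (Hl0 : 0 < INR l) by (apply lt_0_INR; lia).
  rewrite m_al_closed by auto.
  apply is_derive_Reals.
  set (A := mlc a (a * INR l) (INR l)).
  set (T := Rpower t a).
  apply is_derive_ext with (fun k => Rpower t (a * INR l - 1) * PSeries A (- (1 - exp (- k)) * T)).
  { intros k. unfold A. rewrite ML3_PSeries; auto. nra. lra. }
  assert (Hh : is_derive (fun k => - (1 - exp (- k)) * T) 0 (- T)).
  { auto_derive. auto. rewrite Ropp_0, exp_0. ring. }
  assert (HP : is_derive (PSeries A) (- (1 - exp (- 0)) * T) (PSeries (PS_derive A) (- (1 - exp (- 0)) * T))).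
  { apply is_derive_PSeries. unfold A. apply mlc_radius; nra. }
  pose proof (is_derive_comp (PSeries A) (fun k => - (1 - exp (- k)) * T) 0 _ _ HP Hh) as HC.
  pose proof (is_derive_scal _ _ (Rpower t (a * INR l - 1)) _ HC) as HS.
  replace (- (1 - exp (- 0)) * T) with 0 in HS by (rewrite Ropp_0, exp_0; ring).
  rewrite PSeries_0 in HS. unfold PS_derive in HS.
  replace (- (INR l * Rpower t (INR l * a + a - 1) / Gamma ((INR l + 1) * a)))
    with (Rpower t (a * INR l - 1) * scal (- T) (INR 1 * A 1%nat)). exact HS.
  change (scal (- T) (INR 1 * A 1%nat)) with (- T * (INR 1 * A 1%nat)).
  unfold A, mlc, T. simpl poch. simpl INR. simpl fact.
  replace (INR l * a + a - 1) with ((a * INR l - 1) + a) by ring.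
  rewrite Rpower_plus. replace (a * 1 + a * INR l) with ((INR l + 1) * a) by ring.
  pose proof (Gamma_pos ((INR l + 1) * a) ltac:(nra)). simpl INR. field. lra.
Qed.

Definition cont_on (t : R) (f : R -> R) := forall u, 0 < u < t -> continuous f u.

Definition Imp (t : R) (f : R -> R) (v : R) : Prop :=
  cont_on t f /\
  (forall eps, 0 < eps -> exists delta, 0 < delta /\ forall c d,
     0 < c < delta -> t - delta < d < t -> c <= d -> Rabs (RInt f c d - v) < eps).

Lemma exR t f c d : cont_on t f -> 0 < c -> c <= d -> d < t -> ex_RInt f c d.
Proof.
  intros Hf Hc Hcd Hd. apply (@ex_RInt_continuous R_CompleteNormedModule).
  intros z Hz. rewrite Rmin_left, Rmax_right in Hz by lra. apply Hf. lra.
Qed.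

Lemma Imp_improper t f v : Imp t f v -> improper_integral f 0 t v.
Proof.
  intros [Hf Hl]. split.
  - intros c d Hc Hcd Hd. constructor. apply ex_RInt_Reals_0. apply (exR t); auto.
  - intros eps Heps. destruct (Hl eps Heps) as [delta [Hd H]]. exists delta. split. lra.
    intros c d pr Hc Hd' Hcd. rewrite <- RInt_Reals. apply H; lra.
Qed.

Lemma RInt_lin (f g : R -> R) a b al be : ex_RInt f a b -> ex_RInt g a b ->
  RInt (fun x => al * f x + be * g x) a b = al * RInt f a b + be * RInt g a b.
Proof.
  intros Hf Hg.
  rewrite (@RInt_plus R_CompleteNormedModule (fun x => al * f x) (fun x => be * g x)).
  - rewrite (@RInt_scal R_CompleteNormedModule f), (@RInt_scal R_CompleteNormedModule g); auto.
  - apply (@ex_RInt_scal R_CompleteNormedModule); auto.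
  - apply (@ex_RInt_scal R_CompleteNormedModule); auto.
Qed.

Lemma cR_plus (f g : R -> R) x : continuous f x -> continuous g x -> continuous (fun y => f y + g y) x.
Proof. intros. apply (@continuous_plus R_UniformSpace R_AbsRing R_NormedModule f g); auto. Qed.

Lemma cR_mult (f g : R -> R) x : continuous f x -> continuous g x -> continuous (fun y => f y * g y) x.
Proof. intros. apply (@continuous_mult R_UniformSpace R_AbsRing f g); auto. Qed.

Lemma cR_const (c x : R) : continuous (fun _ : R => c) x.
Proof. apply (@continuous_const R_UniformSpace R_UniformSpace). Qed.

Lemma cR_id (x : R) : continuous (fun y : R => y) x.
Proof. apply (@continuous_id R_UniformSpace). Qed.

Lemma cR_comp (f g : R -> R) x : continuous f x -> continuous g (f x) -> continuous (fun y => g (f y)) x.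
Proof. intros. apply (@continuous_comp R_UniformSpace R_UniformSpace R_UniformSpace f g); auto. Qed.

Lemma cont_on_lin t f g al be : cont_on t f -> cont_on t g -> cont_on t (fun x => al * f x + be * g x).
Proof.
  intros Hf Hg u Hu. apply cR_plus; apply cR_mult; auto; apply cR_const.
Qed.

Lemma Imp_lin t f g v w al be : Imp t f v -> Imp t g w ->
  Imp t (fun x => al * f x + be * g x) (al * v + be * w).
Proof.
  intros [Hf Hfl] [Hg Hgl]. split. apply cont_on_lin; auto.
  intros eps Heps.
  set (e := eps / (2 * (Rabs al + Rabs be + 1))).
  assert (He : 0 < e) by (unfold e; apply Rdiv_lt_0_compat; [lra| pose proof (Rabs_pos al); pose proof (Rabs_pos be); lra]).
  destruct (Hfl e He) as [d1 [Hd1 H1]]. destruct (Hgl e He) as [d2 [Hd2 H2]].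
  exists (Rmin d1 d2). split. apply Rmin_pos; auto.
  intros c d Hc Hd Hcd.
  pose proof (Rmin_l d1 d2). pose proof (Rmin_r d1 d2).
  rewrite RInt_lin by (apply (exR t); auto; lra).
  specialize (H1 c d ltac:(lra) ltac:(lra) Hcd). specialize (H2 c d ltac:(lra) ltac:(lra) Hcd).
  replace (al * RInt f c d + be * RInt g c d - (al * v + be * w))
    with (al * (RInt f c d - v) + be * (RInt g c d - w)) by ring.
  eapply Rle_lt_trans; [apply Rabs_triang|]. rewrite !Rabs_mult.
  pose proof (Rabs_pos al). pose proof (Rabs_pos be).
  apply Rle_lt_trans with (Rabs al * e + Rabs be * e).
  apply Rplus_le_compat; apply Rmult_le_compat_l; lra.
  assert (He2 : e * (2 * (Rabs al + Rabs be + 1)) = eps) by (unfold e; field; lra).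
  nra.
Qed.

Lemma Imp_unique t f v w : 0 < t -> Imp t f v -> Imp t f w -> v = w.
Proof.
  intros Ht [Hf H1] [_ H2]. apply Rminus_diag_uniq. apply Rabs_eq_0.
  apply Rle_antisym; [|apply Rabs_pos]. apply Rnot_lt_le. intros Hc.
  set (e := Rabs (v - w) / 2).
  destruct (H1 e ltac:(unfold e; lra)) as [d1 [Hd1 K1]]. destruct (H2 e ltac:(unfold e; lra)) as [d2 [Hd2 K2]].
  set (dl := Rmin (Rmin d1 d2) (t/2)).
  assert (0 < dl) by (unfold dl; repeat apply Rmin_pos; lra).
  assert (Hdl : dl <= d1 /\ dl <= d2 /\ dl <= t/2) by (unfold dl; repeat split;
     [eapply Rle_trans; [apply Rmin_l|apply Rmin_l]|eapply Rle_trans; [apply Rmin_l|apply Rmin_r]|apply Rmin_r]).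
  destruct Hdl as [Hdl1 [Hdl2 Hdl3]].
  specialize (K1 (dl/2) (t - dl/2) ltac:(lra) ltac:(lra) ltac:(lra)).
  specialize (K2 (dl/2) (t - dl/2) ltac:(lra) ltac:(lra) ltac:(lra)).
  set (I := RInt f (dl/2) (t - dl/2)) in *.
  assert (Ht3 : Rabs (v - w) <= Rabs (I - v) + Rabs (I - w)).
  { replace (v - w) with (-(I - v) + (I - w)) by ring.
    eapply Rle_trans; [apply Rabs_triang|]. rewrite Rabs_Ropp. lra. }
  unfold e in *. lra.
Qed.

Lemma Imp_ext t f g v : (forall u, 0 < u < t -> f u = g u) -> Imp t f v -> Imp t g v.
Proof.
  intros E [Hf Hl]. split.
  - intros u Hu. apply (continuous_ext_loc g f).
    assert (Hp : 0 < Rmin u (t - u)) by (apply Rmin_pos; lra).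
    exists (mkposreal _ Hp). intros y Hy. apply E. unfold ball in Hy; simpl in Hy. unfold AbsRing_ball, abs, minus, plus, opp in Hy; simpl in Hy.
    apply Rabs_def2 in Hy. pose proof (Rmin_l u (t-u)). pose proof (Rmin_r u (t-u)). lra.
    apply Hf; auto.
  - intros eps Heps. destruct (Hl eps Heps) as [d [Hd H]]. exists d. split; auto.
    intros c dd Hc Hdd Hcd. rewrite <- (RInt_ext f g). apply H; auto.
    intros x Hx. rewrite Rmin_left, Rmax_right in Hx by lra. apply E. lra.
Qed.

Lemma RInt_Chasles_R (f : R -> R) a b c : ex_RInt f a b -> ex_RInt f b c ->
  RInt f a b + RInt f b c = RInt f a c.
Proof. intros. apply (@RInt_Chasles R_CompleteNormedModule); auto. Qed.

Lemma RInt_nonneg t f c d : cont_on t f -> (forall u, 0 < u < t -> 0 <= f u) ->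
  0 < c -> c <= d -> d < t -> 0 <= RInt f c d.
Proof. intros Hf Hp Hc Hcd Hd. apply RInt_ge_0; auto. apply (exR t); auto. intros; apply Hp; lra. Qed.

Lemma RInt_sub_le t f c d c' d' : cont_on t f -> (forall u, 0 < u < t -> 0 <= f u) ->
  0 < c' -> c' <= c -> c <= d -> d <= d' -> d' < t -> RInt f c d <= RInt f c' d'.
Proof.
  intros Hf Hp H1 H2 H3 H4 H5.
  rewrite <- (RInt_Chasles_R f c' c d') by (apply (exR t); auto; lra).
  rewrite <- (RInt_Chasles_R f c d d') by (apply (exR t); auto; lra).
  pose proof (RInt_nonneg t f c' c Hf Hp ltac:(lra) ltac:(lra) ltac:(lra)).
  pose proof (RInt_nonneg t f d d' Hf Hp ltac:(lra) ltac:(lra) ltac:(lra)). lra.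
Qed.

Lemma Imp_near t f v c d eps : Imp t f v -> 0 < eps -> 0 < c -> d < t -> c <= d ->
  exists c' d', 0 < c' <= c /\ d <= d' < t /\ Rabs (RInt f c' d' - v) < eps.
Proof.
  intros [Hf Hl] He Hc Hd Hcd. destruct (Hl eps He) as [dl [Hdl H]].
  set (c' := Rmin (c) (dl / 2)). set (d' := Rmax d (t - dl / 2)).
  assert (0 < c') by (apply Rmin_pos; lra).
  assert (c' <= c) by apply Rmin_l. assert (c' <= dl/2) by apply Rmin_r.
  assert (d <= d') by apply Rmax_l. assert (t - dl/2 <= d') by apply Rmax_r.
  assert (d' < t) by (unfold d'; apply Rmax_lub_lt; lra).
  exists c', d'. repeat split; try lra. apply H; lra.
Qed.

Lemma Imp_RInt_le t f v c d : Imp t f v -> (forall u, 0 < u < t -> 0 <= f u) ->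
  0 < c -> c <= d -> d < t -> RInt f c d <= v.
Proof.
  intros HI Hp Hc Hcd Hd. apply Rnot_lt_le. intros Hlt.
  destruct (Imp_near t f v c d (RInt f c d - v) HI ltac:(lra) Hc Hd Hcd) as [c' [d' [H1 [H2 H3]]]].
  pose proof (RInt_sub_le t f c d c' d' (proj1 HI) Hp ltac:(lra) ltac:(lra) Hcd ltac:(lra) ltac:(lra)).
  apply Rabs_def2 in H3. lra.
Qed.

Lemma Imp_le t f g v w : 0 < t -> Imp t f v -> Imp t g w -> (forall u, 0 < u < t -> f u <= g u) -> v <= w.
Proof.
  intros Ht HF HG Hfg.
  pose proof (Imp_lin t g f w v 1 (-1) HG HF) as HD.
  apply Rnot_lt_le. intros Hlt.
  destruct (Imp_near t _ _ (t/2) (t/2) (v - w) HD ltac:(lra) ltac:(lra) ltac:(lra) ltac:(lra)) as [c [d [H1 [H2 H3]]]].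
  assert (0 <= RInt (fun x => 1 * g x + -1 * f x) c d).
  { apply (RInt_nonneg t); try lra. apply (proj1 HD). intros u Hu. specialize (Hfg u Hu). lra. }
  apply Rabs_def2 in H3. lra.
Qed.

Lemma Imp_mono_exists t f B : 0 < t -> cont_on t f -> (forall u, 0 < u < t -> 0 <= f u) ->
  (forall c d, 0 < c -> c <= d -> d < t -> RInt f c d <= B) -> exists v, Imp t f v.
Proof.
  intros Ht Hf Hp HB.
  set (E := fun r => exists c d, 0 < c /\ c <= d /\ d < t /\ r = RInt f c d).
  destruct (completeness E) as [v [Hub Hlub]].
  - exists B. intros r [c [d [H1 [H2 [H3 ->]]]]]. apply HB; auto.
  - exists (RInt f (t/2) (t/2)). exists (t/2), (t/2). repeat split; lra.
  - exists v. split; auto. intros eps Heps.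
    assert (Hex : exists r, E r /\ v - eps < r).
    { apply Classical_Pred_Type.not_all_not_ex. intros Hn.
      assert (is_upper_bound E (v - eps)).
      { intros r Hr. apply Rnot_lt_le. intros Hc. apply (Hn r). split; auto. }
      specialize (Hlub _ H). lra. }
    destruct Hex as [r [[c0 [d0 [H1 [H2 [H3 ->]]]]] Hr]].
    exists (Rmin c0 (t - d0)). split. apply Rmin_pos; lra.
    intros c d Hc Hd Hcd. pose proof (Rmin_l c0 (t - d0)). pose proof (Rmin_r c0 (t - d0)).
    pose proof (RInt_sub_le t f c0 d0 c d Hf Hp ltac:(lra) ltac:(lra) H2 ltac:(lra) ltac:(lra)).
    assert (RInt f c d <= v). { apply Hub. exists c, d. repeat split; auto; lra. }
    apply Rabs_def1; lra.
Qed.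

Lemma Imp_FTC t f G L0 L1 : cont_on t f -> (forall u, 0 < u < t -> is_derive G u (f u)) ->
  (forall eps, 0 < eps -> exists dl, 0 < dl /\ forall c, 0 < c < dl -> Rabs (G c - L0) < eps) ->
  (forall eps, 0 < eps -> exists dl, 0 < dl /\ forall d, t - dl < d < t -> Rabs (G d - L1) < eps) ->
  Imp t f (L1 - L0).
Proof.
  intros Hf HG H0 H1. split; auto. intros eps Heps.
  destruct (H0 (eps/2) ltac:(lra)) as [d0 [Hd0 K0]]. destruct (H1 (eps/2) ltac:(lra)) as [d1 [Hd1 K1]].
  exists (Rmin d0 d1). split. apply Rmin_pos; auto. intros c d Hc Hd Hcd.
  pose proof (Rmin_l d0 d1). pose proof (Rmin_r d0 d1).
  assert (E : RInt f c d = G d - G c).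
  { apply (@is_RInt_unique R_CompleteNormedModule).
    apply (@is_RInt_derive R_CompleteNormedModule G f c d).
    - intros x Hx. rewrite Rmin_left, Rmax_right in Hx by lra. apply HG. lra.
    - intros x Hx. rewrite Rmin_left, Rmax_right in Hx by lra. apply Hf. lra. }
  rewrite E. specialize (K0 c ltac:(lra)). specialize (K1 d ltac:(lra)).
  replace (G d - G c - (L1 - L0)) with ((G d - L1) - (G c - L0)) by ring.
  eapply Rle_lt_trans; [apply Rabs_triang|]. rewrite Rabs_Ropp. lra.
Qed.

Lemma minus_R (x y : R) : minus x y = x - y.
Proof. reflexivity. Qed.

Lemma is_derive_ext_R (f g : R -> R) x l : (forall y, f y = g y) -> is_derive f x l -> is_derive g x l.
Proof. intros H. apply is_derive_ext. exact H. Qed.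

Lemma scal_R (x y : R) : scal x y = x * y.
Proof. reflexivity. Qed.

Lemma der_mult_R (f g : R -> R) x df dg : is_derive f x df -> is_derive g x dg ->
  is_derive (fun y => f y * g y) x (df * g x + f x * dg).
Proof.
  intros H1 H2. pose proof (@is_derive_mult R_AbsRing f g x df dg H1 H2 (fun n m => Rmult_comm n m)).
  exact H.
Qed.

Lemma plus_R (x y : R) : plus x y = x + y.
Proof. reflexivity. Qed.

Lemma der_Rpower x e : 0 < x -> is_derive (fun z => Rpower z e) x (e * Rpower x (e - 1)).
Proof. intros Hx. apply is_derive_Reals. apply derivable_pt_lim_power; auto. Qed.

Lemma cont_Rpower x e : 0 < x -> continuous (fun z => Rpower z e) x.
Proof. intros Hx. apply (@ex_derive_continuous R_AbsRing R_NormedModule). eexists. apply der_Rpower; auto. Qed.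

Lemma cR_deriv (f : R -> R) x l : is_derive f x l -> continuous f x.
Proof. intros H. apply (@ex_derive_continuous R_AbsRing R_NormedModule). exists l; auto. Qed.

Definition W (t p q : R) (u : R) : R := Rpower (t - u) (p - 1) * Rpower u (q - 1).

Lemma cont_W t p q : cont_on t (W t p q).
Proof.
  intros u Hu. unfold W. apply cR_mult.
  - apply (cR_comp (fun y => t - y) (fun z => Rpower z (p - 1))).
    apply (cR_deriv _ _ (-1)). auto_derive; auto; ring.
    apply cont_Rpower; lra.
  - apply cont_Rpower; lra.
Qed.

Lemma W_nonneg t p q u : 0 <= W t p q u.
Proof. unfold W. apply Rmult_le_pos; left; apply Rpower_pos. Qed.

Lemma Rpower_small q eps : 0 < q -> 0 < eps -> exists dl, 0 < dl /\ forall x, 0 < x < dl -> Rpower x q < eps.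
Proof.
  intros Hq He. exists (Rpower eps (/ q)). split. apply Rpower_pos.
  intros x Hx. replace eps with (Rpower (Rpower eps (/ q)) q).
  apply (Rlt_Rpower_l x (Rpower eps (/ q)) q); auto.
  rewrite Rpower_mult, Rinv_l, Rpower_1; lra.
Qed.

Lemma Rpower_interval z A B e : 0 < A -> A <= z <= B -> Rpower z e <= Rpower A e + Rpower B e.
Proof.
  intros HA Hz. pose proof (Rpower_pos A e). pose proof (Rpower_pos B e).
  destruct (Rle_dec 0 e) as [h|h].
  - assert (Rpower z e <= Rpower B e) by (apply Rle_Rpower_l; lra). lra.
  - assert (Rpower A (- e) <= Rpower z (- e)) by (apply Rle_Rpower_l; lra).
    replace e with (- - e) by ring. rewrite (Rpower_Ropp z (-e)), (Rpower_Ropp A (-e)), (Rpower_Ropp B (-e)).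
    pose proof (Rpower_pos A (-e)).
    assert (/ Rpower z (- e) <= / Rpower A (- e)) by (apply Rinv_le_contravar; lra).
    pose proof (Rpower_pos B (- e)). assert (0 < / Rpower B (- e)) by (apply Rinv_0_lt_compat; lra). lra.
Qed.

Lemma RInt_pow_left q c d : 0 < q -> 0 < c -> c <= d ->
  RInt (fun u => Rpower u (q - 1)) c d = (Rpower d q - Rpower c q) / q.
Proof.
  intros Hq Hc Hcd. apply (@is_RInt_unique R_CompleteNormedModule).
  replace ((Rpower d q - Rpower c q) / q) with (Rpower d q / q - Rpower c q / q) by (field; lra).
  rewrite <- (minus_R (Rpower d q / q) (Rpower c q / q)).
  apply (@is_RInt_derive R_CompleteNormedModule (fun u => Rpower u q / q)).
  - intros x Hx. rewrite Rmin_left, Rmax_right in Hx by lra.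
    apply (is_derive_ext_R (fun y => / q * Rpower y q)). intros; unfold Rdiv; ring.
    replace (Rpower x (q - 1)) with (/ q * (q * Rpower x (q - 1))) by (field; lra).
    apply is_derive_scal. apply der_Rpower. lra.
  - intros x Hx. rewrite Rmin_left, Rmax_right in Hx by lra. apply cont_Rpower. lra.
Qed.

Lemma der_Rpower_tm t u e : u < t -> is_derive (fun y => Rpower (t - y) e) u (- (e * Rpower (t - u) (e - 1))).
Proof.
  intros Hu.
  pose proof (is_derive_comp (fun z => Rpower z e) (fun y => t - y) u _ (-1) (der_Rpower (t - u) e ltac:(lra))).
  assert (is_derive (fun y => t - y) u (-1)) by (auto_derive; auto; ring).
  specialize (H H0). rewrite scal_R in H. replace (- (e * Rpower (t - u) (e - 1))) with (-1 * (e * Rpower (t - u) (e - 1))) by ring.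
  eapply is_derive_ext_R; [|exact H]. intros; reflexivity.
Qed.

Lemma cont_pow_left t q : cont_on t (fun u => Rpower u (q - 1)).
Proof. intros u Hu. apply cont_Rpower; lra. Qed.

Lemma cont_pow_right t p : cont_on t (fun u => Rpower (t - u) (p - 1)).
Proof. intros u Hu. eapply cR_deriv. apply der_Rpower_tm. lra. Qed.

Lemma RInt_pow_right t p c d : 0 < p -> c <= d -> d < t ->
  RInt (fun u => Rpower (t - u) (p - 1)) c d = (Rpower (t - c) p - Rpower (t - d) p) / p.
Proof.
  intros Hp Hcd Hd. apply (@is_RInt_unique R_CompleteNormedModule).
  replace ((Rpower (t - c) p - Rpower (t - d) p) / p) with ((- Rpower (t - d) p / p) - (- Rpower (t - c) p / p)) by (field; lra).
  rewrite <- (minus_R (- Rpower (t - d) p / p) (- Rpower (t - c) p / p)).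
  apply (@is_RInt_derive R_CompleteNormedModule (fun u => - Rpower (t - u) p / p)).
  - intros x Hx. rewrite Rmin_left, Rmax_right in Hx by lra.
    apply (is_derive_ext_R (fun y => (- / p) * Rpower (t - y) p)). intros; unfold Rdiv; ring.
    replace (Rpower (t - x) (p - 1)) with ((- / p) * (- (p * Rpower (t - x) (p - 1)))) by (field; lra).
    apply is_derive_scal. apply der_Rpower_tm. lra.
  - intros x Hx. rewrite Rmin_left, Rmax_right in Hx by lra. eapply cR_deriv. apply der_Rpower_tm. lra.
Qed.

Lemma W_bound t p q u : 0 < t -> 0 < u < t ->
  W t p q u <= ((Rpower t (p - 1) + Rpower (t/2) (p - 1)) + (Rpower t (q - 1) + Rpower (t/2) (q - 1)))
     * (Rpower u (q - 1) + Rpower (t - u) (p - 1)).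
Proof.
  intros Ht Hu. unfold W.
  pose proof (Rpower_pos t (p-1)). pose proof (Rpower_pos (t/2) (p-1)).
  pose proof (Rpower_pos t (q-1)). pose proof (Rpower_pos (t/2) (q-1)).
  pose proof (Rpower_pos u (q-1)). pose proof (Rpower_pos (t-u) (p-1)).
  destruct (Rle_dec u (t/2)).
  - pose proof (Rpower_interval (t - u) (t/2) t (p-1) ltac:(lra) ltac:(lra)). nra.
  - pose proof (Rpower_interval u (t/2) t (q-1) ltac:(lra) ltac:(lra)). nra.
Qed.

Lemma Beta_exists t p q : 0 < t -> 0 < p -> 0 < q -> exists v, Imp t (W t p q) v.
Proof.
  intros Ht Hp Hq.
  set (M := (Rpower t (p - 1) + Rpower (t/2) (p - 1)) + (Rpower t (q - 1) + Rpower (t/2) (q - 1))).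
  assert (HM : 0 < M) by (unfold M; pose proof (Rpower_pos t (p-1)); pose proof (Rpower_pos (t/2) (p-1));
     pose proof (Rpower_pos t (q-1)); pose proof (Rpower_pos (t/2) (q-1)); lra).
  apply (Imp_mono_exists t _ (M * (Rpower t q / q + Rpower t p / p))); auto.
  apply cont_W. intros; apply W_nonneg.
  intros c d Hc Hcd Hd.
  apply Rle_trans with (RInt (fun u => M * Rpower u (q - 1) + M * Rpower (t - u) (p - 1)) c d).
  - apply RInt_le; auto. apply (exR t); auto. apply cont_W.
    apply (exR t); auto. apply cont_on_lin. apply cont_pow_left. apply cont_pow_right.
    intros x Hx. rewrite <- Rmult_plus_distr_l. apply W_bound; lra.
  - rewrite RInt_lin by (apply (exR t); auto; first [apply cont_pow_left|apply cont_pow_right|lra]).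
    rewrite RInt_pow_left, RInt_pow_right by lra.
    rewrite <- Rmult_plus_distr_l. apply Rmult_le_compat_l. lra.
    assert (Rpower d q <= Rpower t q) by (apply Rle_Rpower_l; lra).
    assert (Rpower (t - c) p <= Rpower t p) by (apply Rle_Rpower_l; lra).
    pose proof (Rpower_pos c q). pose proof (Rpower_pos (t - d) p).
    apply Rplus_le_compat; unfold Rdiv; apply Rmult_le_compat_r; try (left; apply Rinv_0_lt_compat; lra); lra.
Qed.

Lemma cont_eps (f : R -> R) x : continuous f x ->
  forall eps, 0 < eps -> exists dl, 0 < dl /\ forall y, Rabs (y - x) < dl -> Rabs (f y - f x) < eps.
Proof.
  intros Hc eps He. unfold continuous in Hc.
  pose proof (proj1 (filterlim_locally f (f x)) Hc (mkposreal _ He)) as H.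
  destruct H as [dl Hdl]. exists dl. split. apply cond_pos.
  intros y Hy. apply (Hdl y). exact Hy.
Qed.

Definition Jf (t p q : R) : R := epsilon (inhabits 0) (fun v => Imp t (W t p q) v).

Lemma J_spec t p q : 0 < t -> 0 < p -> 0 < q -> Imp t (W t p q) (Jf t p q).
Proof. intros. unfold Jf. apply epsilon_spec. apply Beta_exists; auto. Qed.

Lemma J_eq t p q v : 0 < t -> 0 < p -> 0 < q -> Imp t (W t p q) v -> Jf t p q = v.
Proof. intros. apply (Imp_unique t (W t p q)); auto. apply J_spec; auto. Qed.

Lemma J1 t p : 0 < t -> 0 < p -> Jf t p 1 = Rpower t p / p.
Proof.
  intros Ht Hp. apply J_eq; auto. lra.
  apply (Imp_ext t (fun u => Rpower (t - u) (p - 1))).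
  { intros u Hu. unfold W. replace (1 - 1) with 0 by ring. rewrite Rpower_O by lra. ring. }
  replace (Rpower t p / p) with (0 - (- Rpower t p / p)) by (field; lra).
  apply (Imp_FTC t _ (fun u => - Rpower (t - u) p / p)).
  - apply cont_pow_right.
  - intros u Hu. apply (is_derive_ext_R (fun y => (- / p) * Rpower (t - y) p)). intros; unfold Rdiv; ring.
    replace (Rpower (t - u) (p - 1)) with ((- / p) * (- (p * Rpower (t - u) (p - 1)))) by (field; lra).
    apply is_derive_scal. apply der_Rpower_tm. lra.
  - intros eps He. destruct (cont_eps (fun z => Rpower z p) t (cont_Rpower t p Ht) (eps * p) ltac:(nra)) as [dl [Hdl H]].
    exists dl. split; auto. intros c Hc. specialize (H (t - c) ltac:(rewrite Rabs_left; lra)).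
    replace (- Rpower (t - c) p / p - - Rpower t p / p) with (- ((Rpower (t - c) p - Rpower t p) / p)) by (field; lra).
    rewrite Rabs_Ropp. unfold Rdiv. rewrite Rabs_mult, (Rabs_pos_eq (/ p)) by (left; apply Rinv_0_lt_compat; lra).
    apply (Rmult_lt_reg_r p); auto. rewrite Rmult_assoc, Rinv_l, Rmult_1_r by lra. lra.
  - intros eps He. destruct (Rpower_small p (eps * p) Hp ltac:(nra)) as [dl [Hdl H]].
    exists dl. split; auto. intros d Hd. specialize (H (t - d) ltac:(lra)).
    pose proof (Rpower_pos (t - d) p).
    rewrite Rminus_0_r. rewrite Rabs_left1. 2: { unfold Rdiv. assert (0 < / p) by (apply Rinv_0_lt_compat; lra). nra. }
    apply (Rmult_lt_reg_r p); auto. replace (- (- Rpower (t - d) p / p) * p) with (Rpower (t - d) p) by (field; lra). lra.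
Qed.

Lemma Rpower_pred x e : 0 < x -> Rpower x e = Rpower x (e - 1) * x.
Proof. intros. replace e with ((e - 1) + 1) at 1 by ring. rewrite Rpower_plus, Rpower_1; auto. Qed.

Lemma J_rec t p q : 0 < t -> 0 < p -> 0 < q -> Jf t p (q + 1) * (p + q) = q * t * Jf t p q.
Proof.
  intros Ht Hp Hq.
  pose proof (Imp_lin t (W t p q) (W t p (q + 1)) _ _ (q * t) (- (p + q)) (J_spec t p q Ht Hp Hq) (J_spec t p (q+1) Ht Hp ltac:(lra))) as H1.
  assert (H2 : Imp t (fun x => q * t * W t p q x + - (p + q) * W t p (q + 1) x) (0 - 0)).
  { apply (Imp_FTC t _ (fun u => Rpower u q * Rpower (t - u) p)).
    - apply cont_on_lin; apply cont_W.
    - intros u Hu.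
      pose proof (der_mult_R (fun y => Rpower y q) (fun y => Rpower (t - y) p) u _ _ (der_Rpower u q ltac:(lra)) (der_Rpower_tm t u p ltac:(lra))) as HD.
      replace (q * t * W t p q u + - (p + q) * W t p (q + 1) u) with
        (q * Rpower u (q - 1) * Rpower (t - u) p + Rpower u q * - (p * Rpower (t - u) (p - 1))); auto.
      unfold W. replace (q + 1 - 1) with q by ring.
      rewrite (Rpower_pred u q), (Rpower_pred (t - u) p) by lra.
      ring.
    - intros eps He. destruct (Rpower_small q (eps / Rpower t p) Hq ltac:(apply Rdiv_lt_0_compat; auto; apply Rpower_pos)) as [dl [Hdl H]].
      exists (Rmin dl t). split. apply Rmin_pos; auto. intros c Hc.
      pose proof (Rmin_l dl t). pose proof (Rmin_r dl t).
      specialize (H c ltac:(lra)). rewrite Rminus_0_r.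
      pose proof (Rpower_pos c q). pose proof (Rpower_pos (t - c) p). pose proof (Rpower_pos t p).
      assert (Rpower (t - c) p <= Rpower t p) by (apply Rle_Rpower_l; lra).
      rewrite Rabs_pos_eq by nra.
      apply Rle_lt_trans with (Rpower c q * Rpower t p). apply Rmult_le_compat_l; lra.
      apply (Rmult_lt_compat_r (Rpower t p)) in H; auto. replace (eps / Rpower t p * Rpower t p) with eps in H by (field; lra). lra.
    - intros eps He. destruct (Rpower_small p (eps / Rpower t q) Hp ltac:(apply Rdiv_lt_0_compat; auto; apply Rpower_pos)) as [dl [Hdl H]].
      exists (Rmin dl t). split. apply Rmin_pos; auto. intros d Hd.
      pose proof (Rmin_l dl t). pose proof (Rmin_r dl t).
      specialize (H (t - d) ltac:(lra)). rewrite Rminus_0_r.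
      pose proof (Rpower_pos d q). pose proof (Rpower_pos (t - d) p). pose proof (Rpower_pos t q).
      assert (Rpower d q <= Rpower t q) by (apply Rle_Rpower_l; lra).
      rewrite Rabs_pos_eq by nra.
      apply Rle_lt_trans with (Rpower t q * Rpower (t - d) p). apply Rmult_le_compat_r; lra.
      apply (Rmult_lt_compat_l (Rpower t q)) in H; auto. replace (Rpower t q * (eps / Rpower t q)) with eps in H by (field; lra). lra. }
  pose proof (Imp_unique t _ _ _ Ht H1 H2). lra.
Qed.

Lemma J_mono t p s s' : 0 < t -> 0 < p -> 0 < s -> s <= s' ->
  Jf t p s' <= Rpower t (s' - s) * Jf t p s.
Proof.
  intros Ht Hp Hs Hss.
  pose proof (Imp_lin t _ _ _ _ (Rpower t (s' - s)) 0 (J_spec t p s Ht Hp Hs) (J_spec t p s Ht Hp Hs)) as H.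
  replace (Rpower t (s' - s) * Jf t p s) with (Rpower t (s' - s) * Jf t p s + 0 * Jf t p s) by ring.
  apply (Imp_le t (W t p s') _ _ _ Ht (J_spec t p s' Ht Hp ltac:(lra)) H).
  intros u Hu. unfold W. rewrite Rmult_0_l, Rplus_0_r.
  replace (s' - 1) with ((s - 1) + (s' - s)) by ring. rewrite Rpower_plus.
  pose proof (Rpower_pos (t - u) (p - 1)). pose proof (Rpower_pos u (s - 1)).
  assert (Rpower u (s' - s) <= Rpower t (s' - s)) by (apply Rle_Rpower_l; lra).
  apply Rle_trans with (Rpower (t - u) (p - 1) * Rpower u (s - 1) * Rpower t (s' - s)).
  rewrite <- Rmult_assoc. apply Rmult_le_compat_l. nra. lra.
  right; ring.
Qed.

Lemma J_int t p n : 0 < t -> 0 < p ->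
  Jf t p (INR n + 1) * prod_shift p n = Rpower t (p + INR n) * INR (fact n).
Proof.
  intros Ht Hp. induction n.
  - simpl INR. rewrite Rplus_0_l, Rplus_0_r. rewrite J1 by auto. cbn [prod_shift]. simpl. field. lra.
  - cbn [prod_shift]. replace (INR (S n) + 1) with (INR n + 1 + 1) by (rewrite S_INR; ring).
    pose proof (J_rec t p (INR n + 1) Ht Hp ltac:(pose proof (pos_INR n); lra)) as R.
    replace (p + (INR n + 1)) with (p + INR (S n)) in R by (rewrite S_INR; ring).
    transitivity (prod_shift p n * (Jf t p (INR n + 1 + 1) * (p + INR (S n)))). ring.
    rewrite R. rewrite fact_simpl, mult_INR, S_INR.
    replace (p + (INR n + 1)) with ((p + INR n) + 1) by ring. rewrite Rpower_plus, Rpower_1 by lra.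
    transitivity ((Rpower t (p + INR n) * INR (fact n)) * (t * (INR n + 1))).
    rewrite <- IHn. ring. ring.
Qed.

Lemma J_shift t p q n : 0 < t -> 0 < p -> 0 < q ->
  Jf t p (q + INR n + 1) * prod_shift (p + q) n = Jf t p q * t ^ (S n) * prod_shift q n.
Proof.
  intros Ht Hp Hq. induction n.
  - replace (q + INR 0 + 1) with (q+1) by (simpl; ring). cbn [prod_shift].
    rewrite J_rec by auto. rewrite pow_1. ring.
  - cbn [prod_shift]. pose proof (pos_INR n).
    pose proof (J_rec t p (q + INR n + 1) Ht Hp ltac:(lra)) as R.
    replace (q + INR (S n) + 1) with (q + INR n + 1 + 1) by (rewrite S_INR; ring).
    replace (p + q + INR (S n)) with (p + (q + INR n + 1)) by (rewrite S_INR; ring).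
    transitivity (prod_shift (p + q) n * (Jf t p (q + INR n + 1 + 1) * (p + (q + INR n + 1)))). ring.
    rewrite R. replace (q + INR (S n)) with (q + INR n + 1) by (rewrite S_INR; ring).
    transitivity (t * (q + INR n + 1) * (Jf t p (q + INR n + 1) * prod_shift (p + q) n)). ring.
    rewrite IHn. simpl. ring.
Qed.

Lemma J_int_pos t p n : 0 < t -> 0 < p -> 0 < Jf t p (INR n + 1).
Proof.
  intros Ht Hp. pose proof (J_int t p n Ht Hp). pose proof (prod_shift_pos p n Hp).
  pose proof (Rpower_pos t (p + INR n)). pose proof (lt_0_INR _ (lt_O_fact n)).
  assert (0 < Jf t p (INR n + 1) * prod_shift p n) by (rewrite H; nra). nra.
Qed.

Lemma ratio_lb t p n K : 0 < t -> 0 < p ->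
  Jf t p (INR n + 1) * t ^ K * (INR n / (p + INR (S n))) ^ K <= Jf t p (INR (n + K) + 1).
Proof.
  intros Ht Hp. pose proof (pos_INR n).
  assert (Hr0 : 0 <= INR n / (p + INR (S n))) by (apply Rmult_le_pos; auto; left; apply Rinv_0_lt_compat; rewrite S_INR; lra).
  induction K.
  - rewrite Nat.add_0_r. simpl. lra.
  - rewrite Nat.add_succ_r. set (q' := INR (n + K) + 1).
    assert (Hq' : 0 < q') by (unfold q'; pose proof (pos_INR (n+K)); lra).
    pose proof (J_rec t p q' Ht Hp Hq') as R.
    replace (INR (S (n + K)) + 1) with (q' + 1) by (unfold q'; rewrite S_INR; ring).
    assert (Hpos : 0 < Jf t p q') by (apply J_int_pos; auto).
    assert (HJ : Jf t p (q' + 1) = q' * t * Jf t p q' / (p + q')) by (rewrite <- R; field; lra).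
    rewrite HJ.
    assert (Hr : INR n / (p + INR (S n)) <= q' / (p + q')).
    { unfold q'. rewrite plus_INR, S_INR. pose proof (pos_INR K).
      apply (Rmult_le_reg_r ((p + (INR n + 1)) * (p + (INR (n) + INR K + 1)))). nra.
      field_simplify; try lra. nra. }
    rewrite <- (tech_pow_Rmult t K), <- (tech_pow_Rmult (INR n / (p + INR (S n))) K).
    apply Rle_trans with (Jf t p (INR (n + K) + 1) * t * (INR n / (p + INR (S n)))).
    { replace (Jf t p (INR n + 1) * (t * t ^ K) * (INR n / (p + INR (S n)) * (INR n / (p + INR (S n))) ^ K))
        with ((Jf t p (INR n + 1) * t ^ K * (INR n / (p + INR (S n))) ^ K) * t * (INR n / (p + INR (S n)))) by ring.
      apply Rmult_le_compat_r; auto. apply Rmult_le_compat_r; lra. }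
    fold q'. replace (q' * t * Jf t p q' / (p + q')) with (Jf t p q' * t * (q' / (p + q'))) by (field; lra).
    apply Rmult_le_compat_l; nra.
Qed.

Lemma is_lim_pow (u : nat -> R) (l : R) K : is_lim_seq u l -> is_lim_seq (fun n => u n ^ K) (l ^ K).
Proof.
  intros H. induction K.
  - apply is_lim_seq_const.
  - apply (is_lim_seq_mult' u (fun n => u n ^ K) l (l ^ K) H IHK).
Qed.

Lemma Rn_lim t p q : 0 < t -> 0 < p -> 0 < q ->
  is_lim_seq (fun n => Jf t p (q + INR n + 1) / Jf t p (INR n + 1)) (Rpower t q).
Proof.
  intros Ht Hp Hq.
  set (K := Z.to_nat (up q)).
  assert (HK : q <= INR K).
  { unfold K. rewrite INR_IZR_INZ, Z2Nat.id. pose proof (archimed q). lra.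
    apply le_IZR. pose proof (archimed q). simpl. lra. }
  apply is_lim_seq_le_le with (fun n => Rpower t q * (INR n / (p + INR (S n))) ^ K) (fun _ => Rpower t q).
  - intros n. pose proof (J_int_pos t p n Ht Hp) as HB. pose proof (pos_INR n).
    split.
    + apply (Rmult_le_reg_r (Jf t p (INR n + 1))); auto.
      replace (Jf t p (q + INR n + 1) / Jf t p (INR n + 1) * Jf t p (INR n + 1)) with (Jf t p (q + INR n + 1)) by (field; lra).
      pose proof (ratio_lb t p n K Ht Hp).
      pose proof (J_mono t p (q + INR n + 1) (INR (n + K) + 1) Ht Hp ltac:(lra) ltac:(rewrite plus_INR; lra)).
      replace (INR (n + K) + 1 - (q + INR n + 1)) with (INR K - q) in H1 by (rewrite plus_INR; ring).
      assert (Et : Rpower t (INR K - q) * Rpower t q = t ^ K).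
      { rewrite <- Rpower_plus. replace (INR K - q + q) with (INR K) by ring. apply Rpower_pow; auto. }
      pose proof (Rpower_pos t (INR K - q)).
      apply (Rmult_le_reg_l (Rpower t (INR K - q))); auto.
      replace (Rpower t (INR K - q) * (Rpower t q * (INR n / (p + INR (S n))) ^ K * Jf t p (INR n + 1)))
        with (Jf t p (INR n + 1) * (Rpower t (INR K - q) * Rpower t q) * (INR n / (p + INR (S n))) ^ K) by ring.
      rewrite Et. lra.
    + apply (Rmult_le_reg_r (Jf t p (INR n + 1))); auto.
      replace (Jf t p (q + INR n + 1) / Jf t p (INR n + 1) * Jf t p (INR n + 1)) with (Jf t p (q + INR n + 1)) by (field; lra).
      pose proof (J_mono t p (INR n + 1) (q + INR n + 1) Ht Hp ltac:(lra) ltac:(lra)).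
      replace (q + INR n + 1 - (INR n + 1)) with q in H0 by ring. lra.
  - assert (H : is_lim_seq (fun n => (INR n / (p + INR (S n)))^K) (1^K)) by (apply is_lim_pow, is_lim_seq_n_frac; lra).
    pose proof (is_lim_seq_scal_l _ (Rpower t q) _ H) as H2. simpl in H2. rewrite pow1, Rmult_1_r in H2. exact H2.
  - apply is_lim_seq_const.
Qed.

Lemma J_value t p q : 0 < t -> 0 < p -> 0 < q ->
  Jf t p q = Rpower t (p + q - 1) * Gamma p * Gamma q / Gamma (p + q).
Proof.
  intros Ht Hp Hq.
  assert (Hid : forall n, gauss_seq p n * gauss_seq q n / gauss_seq (p + q) n * Rpower t (p - 1)
      * (Jf t p (q + INR n + 1) / Jf t p (INR n + 1)) = Jf t p q).
  { intros n.
    pose proof (J_shift t p q n Ht Hp Hq) as HA. pose proof (J_int t p n Ht Hp) as HB.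
    pose proof (prod_shift_pos p n Hp). pose proof (prod_shift_pos q n Hq).
    pose proof (prod_shift_pos (p + q) n ltac:(lra)).
    pose proof (lt_0_INR _ (lt_O_fact n)).
    pose proof (Rpower_pos (INR n) p). pose proof (Rpower_pos (INR n) q).
    pose proof (Rpower_pos t (p - 1)). assert (0 < t ^ S n) by (apply pow_lt; auto).
    assert (ER : Rpower t (p + INR n) = Rpower t (p - 1) * t ^ S n).
    { rewrite <- Rpower_pow by auto. rewrite <- Rpower_plus. f_equal. rewrite S_INR. ring. }
    rewrite ER in HB.
    assert (EA : Jf t p (q + INR n + 1) = Jf t p q * t ^ S n * prod_shift q n / prod_shift (p + q) n).
    { rewrite <- HA. field. lra. }
    assert (EB : Jf t p (INR n + 1) = Rpower t (p - 1) * t ^ S n * INR (fact n) / prod_shift p n).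
    { rewrite <- HB. field. lra. }
    rewrite EA, EB. unfold gauss_seq. rewrite Rpower_plus.
    field. repeat split; lra. }
  assert (Hl : is_lim_seq (fun n => gauss_seq p n * gauss_seq q n / gauss_seq (p + q) n * Rpower t (p - 1)
      * (Jf t p (q + INR n + 1) / Jf t p (INR n + 1))) (Gamma p * Gamma q / Gamma (p + q) * Rpower t (p - 1) * Rpower t q)).
  { apply is_lim_seq_mult'. apply is_lim_seq_mult'. apply is_lim_seq_div'. apply is_lim_seq_mult'.
    apply is_lim_seq_Reals, Gamma_cv; auto. apply is_lim_seq_Reals, Gamma_cv; auto.
    apply is_lim_seq_Reals, Gamma_cv; lra. apply Gamma_nz; lra.
    apply is_lim_seq_const. apply Rn_lim; auto. }
  assert (Hc : is_lim_seq (fun n => gauss_seq p n * gauss_seq q n / gauss_seq (p + q) n * Rpower t (p - 1)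
      * (Jf t p (q + INR n + 1) / Jf t p (INR n + 1))) (Jf t p q)).
  { eapply is_lim_seq_ext. intros n. symmetry. apply Hid. apply is_lim_seq_const. }
  apply is_lim_seq_Reals in Hl. apply is_lim_seq_Reals in Hc.
  rewrite (UL_sequence _ _ _ Hc Hl).
  replace (p + q - 1) with ((p - 1) + q) by ring. rewrite Rpower_plus. field. apply Gamma_nz. lra.
Qed.

Lemma Imp_scal t f v c : Imp t f v -> Imp t (fun u => c * f u) (c * v).
Proof.
  intros H. pose proof (Imp_lin t f f v v c 0 H H) as H2.
  replace (c * v) with (c * v + 0 * v) by ring.
  eapply Imp_ext; [|exact H2]. intros; simpl; ring.
Qed.

Lemma Imp_plus t f g v w : Imp t f v -> Imp t g w -> Imp t (fun u => f u + g u) (v + w).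
Proof.
  intros H1 H2. pose proof (Imp_lin t f g v w 1 1 H1 H2) as H3.
  replace (v + w) with (1 * v + 1 * w) by ring.
  eapply Imp_ext; [|exact H3]. intros; simpl; ring.
Qed.

Lemma abs_bounds x M : Rabs x <= M -> - M <= x <= M.
Proof. intros H. pose proof (Rle_abs x). pose proof (Rle_abs (-x)). rewrite Rabs_Ropp in H1. lra. Qed.

Lemma poch1 k : poch 1 k = INR (fact k).
Proof. induction k; simpl poch. reflexivity. rewrite IHk, fact_simpl, mult_INR, S_INR. ring. Qed.

Lemma ML3_inf a b g x : 0 < a -> 0 < b -> 0 <= g ->
  infinite_sum (fun k => mlc a b g k * x ^ k) (ML3 a b g x).
Proof. intros. apply is_series_Reals, ML3_is_series; auto. Qed.

Section Renewal.
Variables (a t : R).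
Hypothesis (ha : 0 < a) (ht : 0 < t).

Let e (k : nat) := mlc a a 1 k.
Let Sx (u : R) := ML3 a a 1 (- Rpower u a).
Let SN (N : nat) (u : R) := sum_f_R0 (fun k => e k * (- Rpower u a) ^ k) N.

Lemma e_nonneg k : 0 <= e k.
Proof. apply mlc_nonneg; lra. Qed.

Lemma cont_S : cont_on t Sx.
Proof.
  intros u Hu. unfold Sx.
  apply (continuous_ext (fun y => PSeries (mlc a a 1) (- Rpower y a))).
  { intros y. symmetry. apply ML3_PSeries; lra. }
  apply (cR_comp (fun y => - Rpower y a) (PSeries (mlc a a 1))).
  - eapply cR_deriv. apply (is_derive_ext_R (fun y => -1 * Rpower y a)). intros; ring.
    apply is_derive_scal. apply der_Rpower. lra.
  - apply (proj1 (continuity_pt_filterlim _ _)). apply PSeries_continuity. apply mlc_radius; lra.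
Qed.

Let M := ML3 a a 1 (Rpower t a).

Lemma S_tail N u : 0 < u < t -> Rabs (Sx u - SN N u) <= M - sum_f_R0 (fun k => e k * (Rpower t a) ^ k) N.
Proof.
  intros Hu. unfold Sx, SN, M.
  apply (tail_bound (fun k => e k * (- Rpower u a) ^ k) (fun k => e k * (Rpower t a) ^ k)).
  - intros k. rewrite Rabs_mult, Rabs_pos_eq by apply e_nonneg. apply Rmult_le_compat_l. apply e_nonneg.
    rewrite <- RPow_abs, Rabs_Ropp, Rabs_pos_eq by (left; apply Rpower_pos).
    apply pow_incr. split. left; apply Rpower_pos. apply Rle_Rpower_l; lra.
  - apply ML3_inf; lra.
  - apply ML3_inf; lra.
Qed.

Lemma S_bound u : 0 < u < t -> Rabs (Sx u) <= M.
Proof.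
  intros Hu. pose proof (S_tail 0 u Hu). unfold SN in H. cbn [sum_f_R0 pow] in H.
  pose proof (e_nonneg 0).
  assert (Rabs (Sx u) <= Rabs (Sx u - e 0 * 1) + Rabs (e 0 * 1)).
  { replace (Sx u) with ((Sx u - e 0 * 1) + e 0 * 1) at 1 by ring. apply Rabs_triang. }
  rewrite (Rabs_pos_eq (e 0 * 1)) in H1 by lra. lra.
Qed.

Lemma W_pow p k u : 0 < u -> W t p a u * (e k * (- Rpower u a) ^ k) = e k * (-1) ^ k * W t p (a + a * INR k) u.
Proof.
  intros Hu. unfold W.
  replace (a + a * INR k - 1) with ((a - 1) + INR k * a) by ring.
  rewrite Rpower_split by auto.
  replace (- Rpower u a) with ((-1) * Rpower u a) by ring. rewrite Rpow_mult_distr. ring.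
Qed.

Lemma Imp_SN p N : 0 < p ->
  Imp t (fun u => W t p a u * SN N u) (sum_f_R0 (fun k => e k * (-1) ^ k * Jf t p (a + a * INR k)) N).
Proof.
  intros Hp.
  assert (Hk : forall k, Imp t (fun u => W t p a u * (e k * (- Rpower u a) ^ k)) (e k * (-1) ^ k * Jf t p (a + a * INR k))).
  { intros k. pose proof (pos_INR k).
    eapply Imp_ext. 2: apply Imp_scal; apply J_spec; auto; nra.
    intros u Hu. simpl. rewrite W_pow by lra. ring. }
  induction N.
  - unfold SN. cbn [sum_f_R0]. apply Hk.
  - rewrite tech5.
    eapply Imp_ext. 2: apply Imp_plus; [exact IHN | apply (Hk (S N))].
    intros u Hu. cbv beta. unfold SN. rewrite tech5. ring.
Qed.

Lemma cont_WS p : cont_on t (fun u => W t p a u * Sx u).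
Proof. intros u Hu. apply cR_mult. apply cont_W; auto. apply cont_S; auto. Qed.

Lemma Imp_WS_exists p : 0 < p -> exists V, Imp t (fun u => W t p a u * Sx u) V.
Proof.
  intros Hp. pose proof (J_spec t p a ht Hp ha) as HJ.
  assert (HM0 : 0 <= M) by (pose proof (S_bound (t/2) ltac:(lra)); pose proof (Rabs_pos (Sx (t/2))); lra).
  destruct (Imp_mono_exists t (fun u => 1 * (W t p a u * Sx u) + M * W t p a u) (2 * M * Jf t p a) ht) as [V HV].
  - apply cont_on_lin. apply cont_WS. apply cont_W.
  - intros u Hu. pose proof (S_bound u Hu). pose proof (W_nonneg t p a u).
    apply abs_bounds in H. nra.
  - intros c d Hc Hcd Hd.
    apply Rle_trans with (RInt (fun u => (2 * M) * W t p a u + 0 * W t p a u) c d).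
    + apply RInt_le; auto. apply (exR t); auto. apply cont_on_lin. apply cont_WS. apply cont_W.
      apply (exR t); auto. apply cont_on_lin; apply cont_W.
      intros x Hx. pose proof (S_bound x ltac:(lra)). pose proof (W_nonneg t p a x).
      apply abs_bounds in H. nra.
    + rewrite RInt_lin by (apply (exR t); auto; apply cont_W).
      pose proof (Imp_RInt_le t _ _ c d HJ (fun u _ => W_nonneg t p a u) Hc Hcd Hd). nra.
  - exists (1 * V + - M * Jf t p a).
    pose proof (Imp_lin t _ _ _ _ 1 (- M) HV HJ) as H.
    eapply Imp_ext. 2: exact H. intros u Hu. cbv beta. ring.
Qed.

Lemma Imp_WS_value p V : 0 < p -> Imp t (fun u => W t p a u * Sx u) V ->
  infinite_sum (fun k => e k * (-1) ^ k * Jf t p (a + a * INR k)) V.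
Proof.
  intros Hp HV. pose proof (J_spec t p a ht Hp ha) as HJ.
  assert (HJ0 : 0 <= Jf t p a).
  { pose proof (Imp_RInt_le t _ _ (t/2) (t/2) HJ (fun u _ => W_nonneg t p a u) ltac:(lra) ltac:(lra) ltac:(lra)).
    rewrite RInt_point in H. simpl in H. exact H. }
  set (g := fun k => e k * (Rpower t a) ^ k).
  assert (Hg : infinite_sum g M) by (apply ML3_inf; lra).
  assert (Hdiff : forall N, Rabs (V - sum_f_R0 (fun k => e k * (-1) ^ k * Jf t p (a + a * INR k)) N)
                  <= (M - sum_f_R0 g N) * Jf t p a).
  { intros N. set (eN := M - sum_f_R0 g N).
    pose proof (Imp_lin t _ _ _ _ 1 (-1) HV (Imp_SN p N Hp)) as HD.
    pose proof (Imp_scal t _ _ eN HJ) as HE.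
    apply Rabs_le. split.
    - pose proof (Imp_scal t _ _ (-1) HE) as HE'.
      replace (- (eN * Jf t p a)) with (-1 * (eN * Jf t p a)) by ring.
      replace (V - sum_f_R0 (fun k => e k * (-1) ^ k * Jf t p (a + a * INR k)) N)
        with (1 * V + -1 * sum_f_R0 (fun k => e k * (-1) ^ k * Jf t p (a + a * INR k)) N) by ring.
      apply (Imp_le t _ _ _ _ ht HE' HD). intros u Hu. cbv beta.
      pose proof (S_tail N u Hu). fold g in H. fold eN in H. pose proof (W_nonneg t p a u).
      apply abs_bounds in H. nra.
    - replace (V - sum_f_R0 (fun k => e k * (-1) ^ k * Jf t p (a + a * INR k)) N)
        with (1 * V + -1 * sum_f_R0 (fun k => e k * (-1) ^ k * Jf t p (a + a * INR k)) N) by ring.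
      apply (Imp_le t _ _ _ _ ht HD HE). intros u Hu. cbv beta.
      pose proof (S_tail N u Hu). fold g in H. fold eN in H. pose proof (W_nonneg t p a u).
      apply abs_bounds in H. nra. }
  intros eps Heps.
  destruct (Hg (eps / (Jf t p a + 1)) ltac:(apply Rdiv_lt_0_compat; lra)) as [N0 HN0].
  exists N0. intros n Hn. specialize (HN0 n Hn). specialize (Hdiff n). unfold Rdist in *.
  rewrite Rabs_minus_sym. apply Rabs_def2 in HN0.
  apply Rle_lt_trans with ((M - sum_f_R0 g n) * Jf t p a); auto.
  assert ((M - sum_f_R0 g n) * Jf t p a <= eps / (Jf t p a + 1) * Jf t p a) by (apply Rmult_le_compat_r; lra).
  assert (eps / (Jf t p a + 1) * Jf t p a < eps).
  { apply (Rmult_lt_reg_r (Jf t p a + 1)). lra.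
    replace (eps / (Jf t p a + 1) * Jf t p a * (Jf t p a + 1)) with (eps * Jf t p a) by (field; lra). nra. }
  lra.
Qed.
End Renewal.

Definition Xf (a t p : R) (k : nat) : R := Rpower t (p + a + a * INR k - 1) / Gamma (p + a + a * INR k).

Lemma term_eq a t p k : 0 < a -> 0 < t -> 0 < p ->
  mlc a a 1 k * (-1) ^ k * Jf t p (a + a * INR k) = Gamma p * ((-1) ^ k * Xf a t p k).
Proof.
  intros Ha Ht Hp. pose proof (pos_INR k).
  rewrite J_value by (auto; nra). unfold mlc, Xf. rewrite poch1.
  replace (a * INR k + a) with (a + a * INR k) by ring.
  replace (p + (a + a * INR k) - 1) with (p + a + a * INR k - 1) by ring.
  replace (p + (a + a * INR k)) with (p + a + a * INR k) by ring.
  pose proof (Gamma_pos (a + a * INR k) ltac:(nra)). pose proof (Gamma_pos (p + a + a * INR k) ltac:(nra)).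
  pose proof (lt_0_INR _ (lt_O_fact k)).
  field. repeat split; lra.
Qed.

Lemma phi_series a t p : 0 < a -> 0 < t -> 0 < p ->
  exists V, Imp t (fun u => Rpower (t - u) (p - 1) * phi a u) V /\
    is_series (fun k => (-1) ^ k * Xf a t p k) (V / Gamma p).
Proof.
  intros Ha Ht Hp. destruct (Imp_WS_exists a t Ha Ht p Hp) as [V HV].
  exists V. split.
  - eapply Imp_ext. 2: exact HV. intros u Hu. unfold W, phi. ring.
  - pose proof (Imp_WS_value a t Ha Ht p V Hp HV) as H. apply is_series_Reals in H.
    pose proof (Gamma_pos p Hp).
    apply is_series_ext_R with (fun k => / Gamma p * (mlc a a 1 k * (-1) ^ k * Jf t p (a + a * INR k))).
    { intros k. rewrite term_eq by auto. field. lra. }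
    replace (V / Gamma p) with (/ Gamma p * V) by (unfold Rdiv; ring).
    apply is_series_scal_R. exact H.
Qed.

Theorem part4 a l t : 0 < a -> (1 <= l)%nat -> 0 < t ->
  exists v1 v2 : R,
       improper_integral (fun u => Rpower (t - u) (a * INR l - 1) * phi a u) 0 t v1
       /\ improper_integral (fun u => m_al a l (t - u) * phi a u) 0 t v2
       /\ m_al a l t = INR l * (v1 / Gamma (a * INR l)) + v2.
Proof.
  intros Ha Hl Ht. assert (Hl0 : 0 < INR l) by (apply lt_0_INR; lia).
  destruct (phi_series a t (a * INR l) Ha Ht ltac:(nra)) as [V1 [H1 S1]].
  destruct (phi_series a t (INR l * a + a) Ha Ht ltac:(nra)) as [V2 [H2 S2]].
  set (c := INR l / Gamma (INR l * a + a)).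
  exists V1, (c * V2). split; [|split].
  - apply Imp_improper; auto.
  - apply Imp_improper. eapply Imp_ext. 2: apply Imp_scal; exact H2.
    intros u Hu. cbv beta. rewrite m_al_closed by (auto; lra). unfold c.
    replace ((INR l + 1) * a) with (INR l * a + a) by ring.
    replace (INR l * a + a - 1) with (INR l * a + a - 1) by ring. unfold Rdiv. ring.
  - rewrite m_al_closed by auto.
    set (X := Xf a t (a * INR l)).
    assert (S2' : is_series (fun k => (-1) ^ k * X (S k)) (V2 / Gamma (INR l * a + a))).
    { eapply is_series_ext_R; [|exact S2]. intros k. unfold X, Xf. rewrite S_INR.
      replace (INR l * a + a + a + a * INR k) with (a * INR l + a + a * (INR k + 1)) by ring. reflexivity. }
    assert (S1' : is_series (fun k => (-1) ^ (S k) * X (S k)) (V1 / Gamma (a * INR l) - X 0%nat)).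
    { apply (is_series_incr_1 (fun k => (-1) ^ k * X k)).
      replace (V1 / Gamma (a * INR l)) with ((V1 / Gamma (a * INR l) - X 0%nat) + ((-1)^0 * X 0%nat)) in S1 by (simpl pow; ring).
      exact S1. }
    assert (S1'' : is_series (fun k => (-1) ^ k * X (S k)) (-1 * (V1 / Gamma (a * INR l) - X 0%nat))).
    { eapply is_series_ext_R; [|apply is_series_scal_R; exact S1']. intros k. cbv beta. rewrite <- tech_pow_Rmult. ring. }
    pose proof (is_series_unique _ _ S1'') as U1. pose proof (is_series_unique _ _ S2') as U2.
    rewrite U1 in U2.
    assert (EV2 : c * V2 = INR l * (X 0%nat - V1 / Gamma (a * INR l))).
    { unfold c. pose proof (Gamma_pos (INR l * a + a) ltac:(nra)).
      replace (INR l / Gamma (INR l * a + a) * V2) with (INR l * (V2 / Gamma (INR l * a + a))) by (field; lra).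
      rewrite <- U2. ring. }
    rewrite EV2. unfold X, Xf. simpl INR.
    replace (a * INR l + a + a * 0 - 1) with (INR l * a + a - 1) by ring.
    replace (a * INR l + a + a * 0) with ((INR l + 1) * a) by ring.
    unfold Rdiv. ring.
Qed.


Theorem mainTheorem11 (a : R) (l : nat) (ha : 0 < a < 1) (hl : (1 <= l)%nat)
  (t : R) (ht : 0 < t) :
  (* the series defining m_{alpha,l}(t) converges to the closed form *)
  infinite_sum (fun n => INR n * Pnal a l n t)
    (INR l * Rpower t (INR l * a + a - 1) / Gamma ((INR l + 1) * a))
  /\ m_al a l t = INR l * Rpower t (INR l * a + a - 1) / Gamma ((INR l + 1) * a)
  (* generating-function derivative representation *)
  /\ derivable_pt_lim
       (fun k => Rpower t (a * INR l - 1)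
                 * ML3 a (a * INR l) (INR l) (- (1 - exp (- k)) * Rpower t a))
       0 (- m_al a l t)
  (* renewal equation *)
  /\ exists v1 v2 : R,
       improper_integral (fun u => Rpower (t - u) (a * INR l - 1) * phi a u) 0 t v1
       /\ improper_integral (fun u => m_al a l (t - u) * phi a u) 0 t v2
       /\ m_al a l t = INR l * (v1 / Gamma (a * INR l)) + v2.
Proof.
  destruct ha as [ha0 ha1].
  split; [apply part1; auto|].
  split; [apply m_al_closed; auto|].
  split; [apply part3; auto|].
  apply part4; auto.
Qed.
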